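(* Let $M$ be a mode for a program $P$ such that $P$ is safe w.r.t. $M$ and $P$ satisfies $M$. Let $\mathit{Eqs}$ be a conjunction of equations and $G_0,G_1,G_2$ be goals, where no disequation occurs in $G_1$ and all derivations from the goal $(G_0,G_1)$ using $P$ are consistent with $M$. Then: (i) $(G_0,G_1,\mathit{Eqs},G_2)\longmapsto^*_P\mathit{true}$ iff $(G_0,\mathit{Eqs},G_1,G_2)\longmapsto^*_P\mathit{true}$; (ii) $\mu(P,(G_0,G_1,\mathit{Eqs},G_2))=\mu(P,(G_0,\mathit{Eqs},G_1,G_2))$; (iii) $\nu(P,(G_0,G_1,\mathit{Eqs},G_2))=\nu(P,(G_0,\mathit{Eqs},G_1,G_2))$.
   Context: Predicate symbols $\mathit{true}$, $=$, $\neq$ are basic, all others non-basic. Basic atoms: $\mathit{true}$, $t_1=t_2$ (equation), $t_1\neq t_2$ (disequation); non-basic atoms $p(t_1,\dots,t_m)$, $p$ non-basic. A goal is a conjunction of atoms ('','' associative, neutral element $\mathit{true}$). A clause $C$ is $A\leftarrow G$ with non-basic head $hd(C)$ and body $bd(C)$; a program is a set of clauses. All mgu's are relevant and idempotent. A variable $X$ is a local variable of goal $G$ in clause $H\leftarrow G_1,G,G_2$ iff $X\in vars(G)-vars(H,G_1,G_2)$. Operational semantics: (1) $(t_1=t_2,G)\longmapsto_P G\vartheta$ if $t_1,t_2$ unify with mgu $\vartheta$; (2) $(t_1\neq t_2,G)\longmapsto_P G$ if not unifiable; (3) $(A,G)\longmapsto_P(bd(C),G)\vartheta$ if $A$ is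 non-basic, $C$ a renamed apart clause of $P$ and $\vartheta$ an mgu of $A$ and $hd(C)$. A derivation is $G_0\longmapsto_P\cdots\longmapsto_P G_z$, of length $z$; successful if $G_z=\mathit{true}$ (then $G_0$ succeeds). $\longmapsto^*_P$ is the reflexive-transitive closure. For a derivation $\delta$, $\lambda(\delta)$ is the number of goals $G_i$ in $\delta$ of the form $(A,K)$ with $A$ non-basic. $\mu(P,G)$ is the minimum of $\lambda(\delta)$ over successful derivations $\delta$ of $G$ in $P$, and $\infty$ if $G$ does not succeed; $\nu(P,G)$ is the minimum length of a successful derivation of $G$ in $P$, and $\infty$ if none. Modes: a mode for non-basic $p$ of arity $h$ is $p(m_1,\dots,m_h)$, $m_i\in\{+,?\}$; $t_i$ is an input argument iff $m_i=+$; variables in input arguments are input variables; a mode for a program contains exactly one mode per non-basic predicate occurring in it. An atom satisfies $M$ iff $M$ has a mode for its predicate and its input arguments are ground. $P$ satisfies $M$ iff for every non-basic $A_0$ satisfying $M$ and every non-basic $A$ and goal $G$ with $A_0\longmapsto^*_P(A,G)$, $A$ satisfies $M$. A derivation $G_0\longmapsto_P\cdots\longmapsto_P G_n$ is consistent with $M$ iff for $i<n$, whenever the leftmost atom of $G_i$ is a non-basic atom $A$, $A$ satisfies $M$. A clause $C$ is safe w.r.t. $M$ iff each variable of each disequation $t_1\neq t_2$ in $bd(C)$ is an input variable of $hd(C)$ or a local variable of $t_1\neq t_2$ in $C$; a program is safe iff all its clauses are. *)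

(* Defs.v *)
From Stdlib Require Import List Arith ClassicalEpsilon Relation_Operators.
Import ListNotations.

Inductive term : Type :=
| Var (x : nat)
| Fn (f : nat) (args : list term).

Definition subst := nat -> term.

Fixpoint tsubst (s : subst) (t : term) : term :=
  match t with
  | Var x => s x
  | Fn f ts => Fn f (map (tsubst s) ts)
  end.

Fixpoint tvars (t : term) : list nat :=
  match t with
  | Var x => [x]
  | Fn _ ts => flat_map tvars ts
  end.

Definition lvars (ts : list term) : list nat := flat_map tvars ts.

(* Basic atoms: equations and disequations; the basic atom [true] is the
   neutral element of "," and is represented by the empty conjunction. *)
Inductive atom : Type :=
| AEq (t1 t2 : term)
| ANeq (t1 t2 : term)
| APred (p : nat) (ts : list term).

Definition goal := list atom.

Definition asubst (s : subst) (a : atom) : atom :=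
  match a with
  | AEq t1 t2 => AEq (tsubst s t1) (tsubst s t2)
  | ANeq t1 t2 => ANeq (tsubst s t1) (tsubst s t2)
  | APred p ts => APred p (map (tsubst s) ts)
  end.

Definition avars (a : atom) : list nat :=
  match a with
  | AEq t1 t2 | ANeq t1 t2 => tvars t1 ++ tvars t2
  | APred _ ts => lvars ts
  end.

Definition gsubst (s : subst) (G : goal) : goal := map (asubst s) G.
Definition gvars (G : goal) : list nat := flat_map avars G.

Record clause : Type := Clause { hd_pred : nat; hd_args : list term; bd : goal }.
Definition hd (C : clause) : atom := APred (hd_pred C) (hd_args C).
Definition csubst (s : subst) (C : clause) : clause :=
  Clause (hd_pred C) (map (tsubst s) (hd_args C)) (gsubst s (bd C)).
Definition cvars (C : clause) : list nat := lvars (hd_args C) ++ gvars (bd C).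

Definition program := clause -> Prop.

Definition unifies (s : subst) (ts ss : list term) : Prop :=
  map (tsubst s) ts = map (tsubst s) ss.

Definition unifiable (ts ss : list term) : Prop := exists s, unifies s ts ss.

(* th is a relevant, idempotent most general unifier of ts and ss *)
Definition is_mgu (th : subst) (ts ss : list term) : Prop :=
  unifies th ts ss /\
  (forall sg, unifies sg ts ss -> exists rho, forall x, sg x = tsubst rho (th x)) /\
  (forall x, tsubst th (th x) = th x) /\
  (forall x, th x <> Var x ->
     In x (lvars ts ++ lvars ss) /\
     (forall y, In y (tvars (th x)) -> In y (lvars ts ++ lvars ss))).

Definition renaming (rho : subst) : Prop :=
  exists f : nat -> nat,
    (forall x, rho x = Var (f x)) /\
    (forall x y, f x = f y -> x = y) /\
    (forall y, exists x, f x = y).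

Definition disjoint (l1 l2 : list nat) : Prop := forall x, In x l1 -> ~ In x l2.

Inductive step (P : program) : goal -> goal -> Prop :=
| step_eq : forall t1 t2 G th,
    is_mgu th [t1] [t2] ->
    step P (AEq t1 t2 :: G) (gsubst th G)
| step_neq : forall t1 t2 G,
    ~ unifiable [t1] [t2] ->
    step P (ANeq t1 t2 :: G) G
| step_res : forall p ts G C rho th,
    P C -> renaming rho ->
    disjoint (cvars (csubst rho C)) (gvars (APred p ts :: G)) ->
    hd_pred C = p ->
    is_mgu th ts (hd_args (csubst rho C)) ->
    step P (APred p ts :: G) (gsubst th (bd (csubst rho C) ++ G)).

Definition steps (P : program) : goal -> goal -> Prop := clos_refl_trans goal (step P).

(* A derivation G_0 |-> ... |-> G_z is a nonempty list of goals; its length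
   is z = (number of goals) - 1. *)
Definition derivation (P : program) (d : list goal) : Prop :=
  forall i, S i < length d -> step P (nth i d []) (nth (S i) d []).

Definition successful_derivation_of (P : program) (G : goal) (d : list goal) : Prop :=
  (exists rest, d = G :: rest) /\ derivation P d /\ last d [] = [].

Definition deriv_length (d : list goal) : nat := length d - 1.

Definition starts_nonbasic (G : goal) : bool :=
  match G with APred _ _ :: _ => true | _ => false end.

Definition lambda (d : list goal) : nat := length (filter starts_nonbasic d).

(* minimum of a set of naturals; None encodes infinity (empty set) *)
Definition min_of (Q : nat -> Prop) : option nat :=
  match excluded_middle_informative
          (exists n, Q n /\ forall m, Q m -> n <= m) with
  | left H => Some (proj1_sig (constructive_indefinite_description _ H))
  | right _ => None
  end.

Definition mu (P : program) (G : goal) : option nat :=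
  min_of (fun n => exists d, successful_derivation_of P G d /\ lambda d = n).

Definition nu (P : program) (G : goal) : option nat :=
  min_of (fun n => exists d, successful_derivation_of P G d /\ deriv_length d = n).

(* A mode assigns to a predicate symbol the list (m_1,...,m_h), true = '+'. *)
Definition mode := nat -> option (list bool).

Definition input_args (ms : list bool) (ts : list term) : list term :=
  map snd (filter fst (combine ms ts)).

Definition input_vars (ms : list bool) (ts : list term) : list nat :=
  lvars (input_args ms ts).

Definition atom_satisfies (M : mode) (a : atom) : Prop :=
  match a with
  | APred p ts => exists ms, M p = Some ms /\ length ms = length ts /\
                             input_vars ms ts = []
  | _ => False
  end.

Definition occurs_in_program (P : program) (p : nat) (ts : list term) : Prop :=
  exists C, P C /\ In (APred p ts) (hd C :: bd C).

Definition mode_for_program (M : mode) (P : program) : Prop :=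
  (forall p, (exists ms, M p = Some ms) <-> (exists ts, occurs_in_program P p ts)) /\
  (forall p ts ms, occurs_in_program P p ts -> M p = Some ms -> length ms = length ts).

Definition program_satisfies (P : program) (M : mode) : Prop :=
  forall A0, atom_satisfies M A0 ->
  forall p ts G, steps P [A0] (APred p ts :: G) -> atom_satisfies M (APred p ts).

Definition consistent_with (M : mode) (d : list goal) : Prop :=
  forall i p ts K, S i < length d -> nth i d [] = APred p ts :: K ->
    atom_satisfies M (APred p ts).

Definition clause_safe (M : mode) (C : clause) : Prop :=
  forall i t1 t2, nth_error (bd C) i = Some (ANeq t1 t2) ->
  forall x, In x (tvars t1 ++ tvars t2) ->
    (exists ms, M (hd_pred C) = Some ms /\ In x (input_vars ms (hd_args C))) \/
    ~ In x (avars (hd C) ++ gvars (firstn i (bd C)) ++ gvars (skipn (S i) (bd C))).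

Definition program_safe (M : mode) (P : program) : Prop :=
  forall C, P C -> clause_safe M C.

(* Main.v *)
Require Import Defs.
From Stdlib Require Import List Arith Lia Classical ClassicalEpsilon Relation_Operators Operators_Properties.
Import ListNotations.


Fixpoint term_ind' (Pr : term -> Prop) (HV : forall x, Pr (Var x))
  (HF : forall f ts, Forall Pr ts -> Pr (Fn f ts)) (t : term) : Pr t :=
  match t with
  | Var x => HV x
  | Fn f ts => HF f ts ((fix go l : Forall Pr l :=
       match l with [] => Forall_nil _ | t :: l => Forall_cons _ (term_ind' Pr HV HF t) (go l) end) ts)
  end.

Definition sc (s1 s2 : subst) : subst := fun x => tsubst s2 (s1 x).

Lemma tsubst_ext : forall t s1 s2, (forall x, In x (tvars t) -> s1 x = s2 x) -> tsubst s1 t = tsubst s2 t.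
Proof.
  induction t using term_ind'; simpl; intros.
  - apply H; auto.
  - f_equal. induction H; simpl in *; auto. f_equal.
    + apply H. intros; apply H0; apply in_or_app; auto.
    + apply IHForall. intros; apply H0; apply in_or_app; auto.
Qed.

Lemma tsubst_comp : forall t s1 s2, tsubst s2 (tsubst s1 t) = tsubst (sc s1 s2) t.
Proof.
  induction t using term_ind'; simpl; intros; auto.
  f_equal. rewrite map_map. induction H; simpl; auto. f_equal; auto.
Qed.

Lemma tsubst_id : forall t, tsubst Var t = t.
Proof.
  induction t using term_ind'; simpl; auto. f_equal. induction H; simpl; auto. f_equal; auto.
Qed.

Lemma tvars_subst : forall t s y, In y (tvars (tsubst s t)) <-> exists x, In x (tvars t) /\ In y (tvars (s x)).
Proof.
  induction t using term_ind'; simpl; intros.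
  - split. intros; exists x; auto. intros [x0 [[<-|[]] H]]; auto.
  - induction H; simpl. split. intros []. intros [x [[] _]].
    rewrite !in_app_iff, H, IHForall. split.
    + intros [[x0 [? ?]]|[x0 [? ?]]]; exists x0; rewrite in_app_iff; auto.
    + intros [x0 [Hx ?]]; rewrite in_app_iff in Hx; destruct Hx; [left|right]; exists x0; auto.
Qed.

Lemma tsubst_fix : forall t s, tsubst s t = t -> forall x, In x (tvars t) -> s x = Var x.
Proof.
  induction t using term_ind'; simpl; intros.
  - destruct H0 as [<-|[]]; auto.
  - injection H0; clear H0; intro H0. induction H; simpl in *. destruct H1.
    injection H0; intros. apply in_app_or in H1; destruct H1; eauto.
Qed.

Lemma lvars_subst : forall ts s y, In y (lvars (map (tsubst s) ts)) <-> exists x, In x (lvars ts) /\ In y (tvars (s x)).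
Proof.
  induction ts; simpl; intros. split. intros []. intros [x [[] _]].
  unfold lvars in *; simpl. rewrite !in_app_iff, tvars_subst, IHts. split.
  - intros [[x0 [? ?]]|[x0 [? ?]]]; exists x0; rewrite in_app_iff; auto.
  - intros [x0 [Hx ?]]; rewrite in_app_iff in Hx; destruct Hx; [left|right]; exists x0; auto.
Qed.

Lemma map_tsubst_ext : forall ts s1 s2, (forall x, In x (lvars ts) -> s1 x = s2 x) -> map (tsubst s1) ts = map (tsubst s2) ts.
Proof.
  induction ts; simpl; intros; auto. unfold lvars in H; simpl in H.
  f_equal. apply tsubst_ext; intros; apply H, in_or_app; auto.
  apply IHts; intros; apply H, in_or_app; auto.
Qed.

Lemma map_tsubst_comp : forall ts s1 s2, map (tsubst s2) (map (tsubst s1) ts) = map (tsubst (sc s1 s2)) ts.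
Proof. intros; rewrite map_map; apply map_ext; intros; apply tsubst_comp. Qed.

Lemma map_tsubst_fix : forall ts s, map (tsubst s) ts = ts -> forall x, In x (lvars ts) -> s x = Var x.
Proof.
  induction ts; simpl; intros. destruct H0. injection H; intros. unfold lvars in H0; simpl in H0.
  apply in_app_or in H0; destruct H0. eapply tsubst_fix; eauto. eapply IHts; eauto.
Qed.

Lemma avars_subst : forall a s y, In y (avars (asubst s a)) <-> exists x, In x (avars a) /\ In y (tvars (s x)).
Proof.
  destruct a; simpl; intros; try apply lvars_subst;
  rewrite !in_app_iff, !tvars_subst; split;
  (intros [[x0 [? ?]]|[x0 [? ?]]]; exists x0; rewrite in_app_iff; auto) ||
  (intros [x0 [Hx ?]]; rewrite in_app_iff in Hx; destruct Hx; [left|right]; exists x0; auto).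
Qed.

Lemma asubst_ext : forall a s1 s2, (forall x, In x (avars a) -> s1 x = s2 x) -> asubst s1 a = asubst s2 a.
Proof.
  destruct a; simpl; intros.
  1,2: f_equal; apply tsubst_ext; intros; apply H, in_or_app; auto.
  f_equal; apply map_tsubst_ext; auto.
Qed.

Lemma asubst_comp : forall a s1 s2, asubst s2 (asubst s1 a) = asubst (sc s1 s2) a.
Proof. destruct a; simpl; intros; f_equal; try apply tsubst_comp; apply map_tsubst_comp. Qed.

Lemma asubst_fix : forall a s, asubst s a = a -> forall x, In x (avars a) -> s x = Var x.
Proof.
  destruct a; simpl; intros; try (injection H; intros).
  1,2: apply in_app_or in H0; destruct H0; [apply (tsubst_fix t1)|apply (tsubst_fix t2)]; auto.
  eapply map_tsubst_fix; eauto.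
Qed.

Lemma gvars_subst : forall G s y, In y (gvars (gsubst s G)) <-> exists x, In x (gvars G) /\ In y (tvars (s x)).
Proof.
  induction G; simpl; intros. split. intros []. intros [x [[] _]].
  unfold gvars in *; simpl. rewrite !in_app_iff, avars_subst, IHG. split.
  - intros [[x0 [? ?]]|[x0 [? ?]]]; exists x0; rewrite in_app_iff; auto.
  - intros [x0 [Hx ?]]; rewrite in_app_iff in Hx; destruct Hx; [left|right]; exists x0; auto.
Qed.

Lemma gsubst_ext : forall G s1 s2, (forall x, In x (gvars G) -> s1 x = s2 x) -> gsubst s1 G = gsubst s2 G.
Proof.
  induction G; simpl; intros; auto. unfold gvars in H; simpl in H.
  f_equal. apply asubst_ext; intros; apply H, in_or_app; auto.
  apply IHG; intros; apply H, in_or_app; auto.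
Qed.

Lemma gsubst_comp : forall G s1 s2, gsubst s2 (gsubst s1 G) = gsubst (sc s1 s2) G.
Proof. intros; unfold gsubst; rewrite map_map; apply map_ext; intros; apply asubst_comp. Qed.

Lemma gsubst_fix : forall G s, gsubst s G = G -> forall x, In x (gvars G) -> s x = Var x.
Proof.
  induction G; simpl; intros. destruct H0. injection H; intros. unfold gvars in H0; simpl in H0.
  apply in_app_or in H0; destruct H0. eapply asubst_fix; eauto. eapply IHG; eauto.
Qed.

Lemma gsubst_app : forall s A B, gsubst s (A ++ B) = gsubst s A ++ gsubst s B.
Proof. intros; apply map_app. Qed.

Lemma gvars_app : forall A B x, In x (gvars (A ++ B)) <-> In x (gvars A) \/ In x (gvars B).
Proof. intros; unfold gvars; rewrite flat_map_app, in_app_iff; tauto. Qed.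

Lemma gvars_cons : forall a A x, In x (gvars (a :: A)) <-> In x (avars a) \/ In x (gvars A).
Proof. intros; unfold gvars; simpl; rewrite in_app_iff; tauto. Qed.

Lemma gsubst_id : forall G, gsubst Var G = G.
Proof.
  intros. rewrite <- (map_id G) at 2. unfold gsubst. apply map_ext. destruct a; simpl; f_equal;
  try apply tsubst_id. rewrite <- (map_id ts) at 2; apply map_ext, tsubst_id.
Qed.


Fixpoint tsize (t : term) : nat :=
  match t with Var _ => 1 | Fn _ ts => S (list_sum (map tsize ts)) end.

Definition system := list (term * term).
Definition unifS (s : subst) (E : system) := forall p, In p E -> tsubst s (fst p) = tsubst s (snd p).
Definition svars (E : system) := flat_map (fun p => tvars (fst p) ++ tvars (snd p)) E.
Definition esize (E : system) := list_sum (map (fun p => tsize (fst p) + tsize (snd p)) E).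
Definition nvars (E : system) := length (nodup Nat.eq_dec (svars E)).

Definition solved (S : list (nat * term)) :=
  NoDup (map fst S) /\ forall x t, In (x, t) S -> forall y, In y (map fst S) -> ~ In y (tvars t).
Definition unifSol (s : subst) (S : list (nat * term)) := forall x t, In (x, t) S -> s x = tsubst s t.
Definition substS (S : list (nat * term)) : subst :=
  fun x => match find (fun p => Nat.eqb (fst p) x) S with Some p => snd p | None => Var x end.

Definition result (E : system) := exists S, solved S /\ (forall s, unifS s E <-> unifSol s S) /\
  (forall x t, In (x, t) S -> In x (svars E) /\ incl (tvars t) (svars E)).

Lemma substS_cases : forall S x, NoDup (map fst S) ->
  (substS S x = Var x /\ ~ In x (map fst S)) \/ (exists t, In (x, t) S /\ substS S x = t).
Proof.
  intros. unfold substS. destruct (find (fun p => Nat.eqb (fst p) x) S) eqn:E.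
  - right. apply find_some in E. destruct E. destruct p; simpl in *. apply Nat.eqb_eq in H1; subst. eauto.
  - left. split; auto. intro. apply in_map_iff in H0. destruct H0 as [[y t] [? ?]]; simpl in *; subst.
    eapply find_none in E; eauto. simpl in E. rewrite Nat.eqb_refl in E; discriminate.
Qed.

Lemma substS_in : forall S x t, NoDup (map fst S) -> In (x, t) S -> substS S x = t.
Proof.
  intros. destruct (substS_cases S x H) as [[_ H1]|[t' [H1 H2]]].
  - exfalso; apply H1; apply in_map_iff; exists (x,t); auto.
  - rewrite H2. clear H2. induction S; simpl in *. destruct H0. inversion H; subst.
    destruct H0, H1; subst; auto. congruence.
    exfalso; apply H4; apply in_map_iff; exists (x,t'); auto.
    exfalso; apply H4; apply in_map_iff; exists (x,t); auto.
Qed.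

Lemma unifS_cons : forall s p E, unifS s (p :: E) <-> tsubst s (fst p) = tsubst s (snd p) /\ unifS s E.
Proof.
  unfold unifS; simpl; split; intros. split; auto. destruct H. destruct H0; subst; auto.
Qed.

Lemma svars_cons : forall p E y, In y (svars (p :: E)) <-> In y (tvars (fst p)) \/ In y (tvars (snd p)) \/ In y (svars E).
Proof. intros; unfold svars; simpl; rewrite !in_app_iff; tauto. Qed.

Lemma nvars_le : forall E E', incl (svars E) (svars E') -> nvars E <= nvars E'.
Proof.
  intros. unfold nvars. apply NoDup_incl_length. apply NoDup_nodup.
  intros y Hy. rewrite nodup_In in *; auto.
Qed.

Lemma nvars_lt : forall E E' x, incl (svars E) (svars E') -> In x (svars E') -> ~ In x (svars E) -> nvars E < nvars E'.
Proof.
  intros. unfold nvars.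
  assert (length (nodup Nat.eq_dec (svars E)) <= length (remove Nat.eq_dec x (nodup Nat.eq_dec (svars E')))).
  { apply NoDup_incl_length. apply NoDup_nodup. intros y Hy. rewrite nodup_In in Hy.
    apply in_in_remove. intro; subst; auto. rewrite nodup_In; auto. }
  pose proof (remove_length_lt Nat.eq_dec (nodup Nat.eq_dec (svars E')) x). rewrite nodup_In in H3. specialize (H3 H0). lia.
Qed.

Lemma tsize_var_le : forall t s x, In x (tvars t) -> tsize (s x) <= tsize (tsubst s t).
Proof.
  induction t using term_ind'; simpl; intros.
  - destruct H as [<-|[]]; auto.
  - induction H; simpl in *. destruct H0. apply in_app_or in H0; destruct H0.
    specialize (H s x H0). lia. specialize (IHForall H0). lia.
Qed.

Lemma occurs : forall t s x, In x (tvars t) -> t <> Var x -> s x <> tsubst s t.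
Proof.
  intros. destruct t. simpl in H. destruct H as [<-|[]]; congruence.
  intro. assert (tsize (s x) < tsize (tsubst s (Fn f args))).
  { simpl. clear H0 H1. induction args; simpl in *. destruct H. apply in_app_or in H; destruct H.
    pose proof (tsize_var_le a s x H). lia. specialize (IHargs H). lia. }
  rewrite H1 in H2; lia.
Qed.

Definition upd (x : nat) (t : term) : subst := fun y => if Nat.eqb y x then t else Var y.
Definition esub (s : subst) (E : system) : system := map (fun p => (tsubst s (fst p), tsubst s (snd p))) E.

Lemma unifSol_agree : forall s S, NoDup (map fst S) -> unifSol s S -> forall v, tsubst s (substS S v) = s v.
Proof.
  intros. destruct (substS_cases S v H) as [[-> _]|[t [H1 ->]]]; simpl; auto.
  symmetry; apply H0; auto.
Qed.

Lemma unifS_esub : forall s s' E, (forall v, tsubst s (s' v) = s v) -> (unifS s (esub s' E) <-> unifS s E).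
Proof.
  intros. unfold unifS, esub. split; intros.
  - specialize (H0 (tsubst s' (fst p), tsubst s' (snd p))). simpl in H0. rewrite !tsubst_comp in H0.
    rewrite !(tsubst_ext _ (sc s' s) s) in H0 by (intros; apply H). apply H0. apply in_map_iff; eauto.
  - apply in_map_iff in H1. destruct H1 as [q [<- ?]]. simpl. rewrite !tsubst_comp.
    rewrite !(tsubst_ext _ (sc s' s) s) by (intros; apply H). auto.
Qed.

Lemma svars_esub : forall s E y, In y (svars (esub s E)) <-> exists z, In z (svars E) /\ In y (tvars (s z)).
Proof.
  induction E; simpl; intros. split. intros []. intros [z [[] _]].
  unfold svars in *; simpl. rewrite !in_app_iff, !tvars_subst, IHE. split.
  - intros [[[x0 [? ?]]|[x0 [? ?]]]|[x0 [? ?]]]; exists x0; rewrite !in_app_iff; auto.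
  - intros [x0 [Hx ?]]; rewrite !in_app_iff in Hx; destruct Hx as [[|]|]; [left;left|left;right|right]; exists x0; auto.
Qed.

Lemma var_case : forall x t E', ~ In x (tvars t) ->
  (forall E'', nvars E'' < nvars ((Var x, t) :: E') -> (exists s, unifS s E'') -> result E'') ->
  (exists s, unifS s ((Var x, t) :: E')) -> result ((Var x, t) :: E').
Proof.
  intros x t E' Hx IH [s0 Hs0].
  set (E'' := esub (upd x t) E').
  assert (Hag : forall s, s x = tsubst s t -> forall v, tsubst s (upd x t v) = s v).
  { intros. unfold upd. destruct (Nat.eqb_spec v x); subst; auto. }
  assert (Hvars : forall y, In y (svars E'') -> y <> x /\ In y (svars ((Var x, t) :: E'))).
  { intros y Hy. apply svars_esub in Hy. destruct Hy as [z [Hz Hy]]. unfold upd in Hy.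
    destruct (Nat.eqb_spec z x); subst.
    - split. intro; subst; auto. apply svars_cons; auto.
    - simpl in Hy. destruct Hy as [<-|[]]. split; auto. apply svars_cons; auto. }
  assert (Hlt : nvars E'' < nvars ((Var x, t) :: E')).
  { apply nvars_lt with x. intros y Hy; apply Hvars; auto. apply svars_cons; simpl; auto.
    intro H; apply Hvars in H; tauto. }
  apply unifS_cons in Hs0. destruct Hs0 as [Hs0x Hs0]. simpl in Hs0x.
  destruct (IH E'' Hlt) as [S'' [[HnS Hsol] [Heq Hrel]]].
  { exists s0. apply unifS_esub; auto. }
  set (th := substS S'').
  assert (HxS : ~ In x (map fst S'')).
  { intro H. apply in_map_iff in H. destruct H as [[y u] [? ?]]; simpl in *; subst.
    apply Hrel in H0. destruct H0 as [H0 _]. apply Hvars in H0. tauto. }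
  assert (Hthv : forall v w, In w (tvars (th v)) -> (In w (svars E'') /\ ~ In w (map fst S'')) \/ (w = v /\ ~ In v (map fst S''))).
  { intros. unfold th in H. destruct (substS_cases S'' v HnS) as [[Hv Hn]|[u [Hu Hv]]]; rewrite Hv in H.
    - simpl in H. destruct H as [<-|[]]; auto.
    - left. split. apply Hrel in Hu. apply Hu; auto. intro. eapply Hsol; eauto. }
  exists ((x, tsubst th t) :: S''). split; [split|split].
  - constructor; auto.
  - intros y u Hyu z Hz Hzu. simpl in Hz, Hyu.
    destruct Hyu as [Hyu|Hyu].
    + injection Hyu; intros; subst. apply tvars_subst in Hzu. destruct Hzu as [v [Hv Hzv]].
      apply Hthv in Hzv. destruct Hz as [<-|Hz].
      * destruct Hzv as [[Hz _]|[-> _]]. apply Hvars in Hz; tauto. auto.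
      * destruct Hzv as [[_ Hn]|[-> Hn]]; auto.
    + destruct Hz as [<-|Hz].
      * apply Hrel in Hyu. apply Hyu, Hvars in Hzu. tauto.
      * eapply Hsol; eauto.
  - intros s. rewrite unifS_cons. simpl. split.
    + intros [H1 H2]. assert (unifSol s S'').
      { apply Heq. apply unifS_esub; auto. }
      intros y u [Hyu|Hyu]; auto. injection Hyu; intros; subst.
      rewrite tsubst_comp. rewrite (tsubst_ext _ (sc th s) s); auto.
      intros; apply unifSol_agree; auto.
    + intros H. assert (unifSol s S'') by (intros y u Hyu; apply H; simpl; auto).
      assert (s x = tsubst s t).
      { rewrite (H x (tsubst th t)) by (simpl; auto). rewrite tsubst_comp.
        apply tsubst_ext. intros; apply unifSol_agree; auto. }
      split; auto. apply (unifS_esub s (upd x t)); auto. apply Heq; auto.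
  - intros y u [Hyu|Hyu].
    + injection Hyu; intros; subst. split. apply svars_cons; simpl; auto.
      intros w Hw. apply tvars_subst in Hw. destruct Hw as [v [Hv Hw]]. apply Hthv in Hw.
      destruct Hw as [[Hw _]|[-> _]]. apply Hvars; auto. apply svars_cons; auto.
    + apply Hrel in Hyu. destruct Hyu. split. apply Hvars; auto. intros w Hw; apply Hvars; auto.
Qed.

Lemma result_equiv : forall E E', (forall s, unifS s E <-> unifS s E') -> incl (svars E) (svars E') -> result E -> result E'.
Proof.
  intros E E' H1 H2 [S [Hs [He Hr]]]. exists S. split; auto. split.
  intros; rewrite <- H1; auto. intros. apply Hr in H. destruct H; split. apply H2; auto. intros w Hw; apply H2; auto.
Qed.

Lemma esize_cons : forall p E, esize (p :: E) = tsize (fst p) + tsize (snd p) + esize E.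
Proof. reflexivity. Qed.

Lemma combine_facts : forall as_ bs, length as_ = length bs ->
  esize (combine as_ bs) = list_sum (map tsize as_) + list_sum (map tsize bs) /\
  (forall y, In y (svars (combine as_ bs)) <-> In y (lvars as_) \/ In y (lvars bs)) /\
  (forall s, unifS s (combine as_ bs) <-> map (tsubst s) as_ = map (tsubst s) bs).
Proof.
  induction as_; destruct bs; intros; try discriminate.
  - split; auto. split. intros; unfold svars, lvars; simpl; tauto. split; auto. intros _ p [].
  - injection H; intros H'. destruct (IHas_ bs H') as [A [B C]]. split; [|split].
    + change (esize ((a,t) :: combine as_ bs) = list_sum (map tsize (a :: as_)) + list_sum (map tsize (t :: bs))).
      rewrite esize_cons, A. simpl. lia.
    + intros. change (combine (a :: as_) (t :: bs)) with ((a,t) :: combine as_ bs). rewrite svars_cons. simpl. rewrite B. unfold lvars; simpl; rewrite !in_app_iff; tauto.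
    + intros. change (combine (a :: as_) (t :: bs)) with ((a,t) :: combine as_ bs). rewrite unifS_cons, C. simpl. split. intros [-> ->]; auto. intros Heq; injection Heq; auto.
Qed.

Lemma unif_main : forall nv, forall E, nvars E <= nv -> (exists s, unifS s E) -> result E.
Proof.
  induction nv as [nv IHnv] using (well_founded_induction lt_wf).
  intros E. remember (esize E) as sz. revert E Heqsz.
  induction sz as [sz IHsz] using (well_founded_induction lt_wf). intros E Hsz Hnv Hu.
  destruct E as [|[a b] E'].
  - exists []. split. split. constructor. intros _ _ []. split. intros; split; intros; [intros _ _ []|intros _ []]. intros _ _ [].
  - assert (HVar : forall x t, ~ In x (tvars t) -> nvars ((Var x, t) :: E') <= nv -> (exists s, unifS s ((Var x, t) :: E')) -> result ((Var x, t) :: E')).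
    { intros. apply var_case; auto. intros. apply (IHnv (nvars E'')); auto. lia. }
    assert (Hsym : forall x t, nvars ((t, Var x) :: E') = nvars ((Var x, t) :: E') /\
                   (forall s, unifS s ((t, Var x) :: E') <-> unifS s ((Var x, t) :: E')) /\
                   (forall y, In y (svars ((t, Var x) :: E')) <-> In y (svars ((Var x, t) :: E')))).
    { intros. assert (forall y, In y (svars ((t, Var x) :: E')) <-> In y (svars ((Var x, t) :: E'))).
      { intros; rewrite !svars_cons; simpl; tauto. }
      split; [|split; auto]. apply Nat.le_antisymm; apply nvars_le; intros y; apply H.
      intros. rewrite !unifS_cons; simpl. split; intros [? ?]; auto. }
    destruct Hu as [s0 Hs0]. pose proof Hs0 as Hs0'. apply unifS_cons in Hs0'. destruct Hs0' as [Hab HE']. simpl in Hab.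
    destruct a as [x|f as_], b as [y|g bs].
    + destruct (Nat.eq_dec x y).
      * subst y. assert (result E').
        { apply (IHsz (esize E')). rewrite Hsz, esize_cons; simpl; lia. auto.
          etransitivity; [|apply Hnv]. apply nvars_le. intros z Hz; rewrite svars_cons; auto. eauto. }
        apply result_equiv with E'; auto. intros; rewrite unifS_cons; simpl; tauto.
        intros z Hz; rewrite svars_cons; simpl; auto.
      * apply HVar; eauto. simpl; intros [?|[]]; auto.
    + destruct (in_dec Nat.eq_dec x (tvars (Fn g bs))).
      * exfalso. eapply occurs; eauto. discriminate.
      * apply HVar; eauto.
    + destruct (Hsym y (Fn f as_)) as [H1 [H2 H3]].
      destruct (in_dec Nat.eq_dec y (tvars (Fn f as_))).
      * exfalso. eapply occurs; eauto. discriminate.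
      * apply result_equiv with ((Var y, Fn f as_) :: E'). intros; rewrite H2; tauto. intros z; apply H3.
        apply HVar; auto. rewrite <- H1; auto. exists s0; apply H2; auto.
    + simpl in Hab. injection Hab; intros Hm Hf. subst g.
      assert (Hl : length as_ = length bs) by (rewrite <- (length_map (tsubst s0) as_), Hm, length_map; auto).
      destruct (combine_facts as_ bs Hl) as [A [B C]].
      assert (result (combine as_ bs ++ E')).
      { apply (IHsz (esize (combine as_ bs ++ E'))).
        - rewrite Hsz, esize_cons. unfold esize at 1. rewrite map_app, list_sum_app. fold (esize (combine as_ bs)). fold (esize E'). rewrite A. simpl. lia.
        - auto.
        - etransitivity; [|apply Hnv]. apply nvars_le. intros z Hz. unfold svars in Hz. rewrite flat_map_app, in_app_iff in Hz.
          fold (svars (combine as_ bs)) in Hz. fold (svars E') in Hz. rewrite svars_cons, B in *. simpl. destruct Hz; tauto.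
        - exists s0. intros p Hp. apply in_app_or in Hp. destruct Hp. apply C; auto. auto. }
      apply result_equiv with (combine as_ bs ++ E'); auto.
      * intros s. rewrite unifS_cons. simpl. split.
        -- intros H1. split. f_equal. apply C. intros p Hp; apply H1, in_or_app; auto. intros p Hp; apply H1, in_or_app; auto.
        -- intros [H1 H2] p Hp. apply in_app_or in Hp. destruct Hp; auto. apply C; auto. injection H1; auto.
      * intros z Hz. unfold svars in Hz. rewrite flat_map_app, in_app_iff in Hz.
        fold (svars (combine as_ bs)) in Hz. fold (svars E') in Hz. rewrite svars_cons, B in *. simpl. destruct Hz; tauto.
Qed.

Lemma unifies_length : forall s ts ss, unifies s ts ss -> length ts = length ss.
Proof. intros. unfold unifies in H. rewrite <- (length_map (tsubst s) ts), H, length_map; auto. Qed.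

Theorem mgu_exists : forall ts ss, unifiable ts ss -> exists th, is_mgu th ts ss.
Proof.
  intros ts ss [s0 Hs0]. pose proof (unifies_length _ _ _ Hs0) as Hl.
  destruct (combine_facts ts ss Hl) as [_ [B C]].
  destruct (unif_main _ (combine ts ss) (le_n _)) as [S [[HnS Hsol] [Heq Hrel]]].
  { exists s0; apply C; auto. }
  set (th := substS S).
  assert (Hfix : forall x t, In (x, t) S -> tsubst th t = t).
  { intros. rewrite <- (tsubst_id t) at 2. apply tsubst_ext. intros y Hy. unfold th.
    destruct (substS_cases S y HnS) as [[-> _]|[u [Hu _]]]; auto.
    exfalso. apply (Hsol x t H y); auto. apply in_map_iff; exists (y,u); auto. }
  assert (Hsolth : unifSol th S).
  { intros x t Hxt. unfold th at 1. rewrite (substS_in S x t HnS Hxt). symmetry; eauto. }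
  exists th. split; [|split; [|split]].
  - apply C, Heq; auto.
  - intros sg Hsg. exists sg. intros x. symmetry. apply unifSol_agree; auto. apply Heq, C; auto.
  - intros x. destruct (substS_cases S x HnS) as [[Hx _]|[u [Hu Hx]]]; unfold th; rewrite Hx.
    simpl; rewrite Hx; auto. apply Hfix with x; auto.
  - intros x Hx. unfold th in Hx. destruct (substS_cases S x HnS) as [[Hx' _]|[u [Hu Hx']]]. congruence.
    unfold th in *; rewrite Hx' in *. apply Hrel in Hu. destruct Hu as [H1 H2].
    split. apply in_app_iff, B; auto. intros y Hy; apply in_app_iff, B; auto.
Qed.


Definition bnb (G : goal) : nat := if starts_nonbasic G then 1 else 0.

Inductive Sx (P : program) : goal -> nat -> nat -> Prop :=
| Sx0 : Sx P [] 0 0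
| SxS : forall G G' n k, step P G G' -> Sx P G' n k -> Sx P G (S n) (bnb G + k).

Lemma SxS' : forall P G G' n k k', step P G G' -> Sx P G' n k -> k' = bnb G + k -> Sx P G (S n) k'.
Proof. intros; subst; econstructor; eauto. Qed.

Definition MG (a : subst) (L1 L2 : list term) :=
  unifies a L1 L2 /\ forall s, unifies s L1 L2 -> exists e, forall x, s x = tsubst e (a x).

Lemma mgu_MG : forall th L1 L2, is_mgu th L1 L2 -> MG th L1 L2.
Proof. intros th L1 L2 [H1 [H2 _]]; split; auto. Qed.

Lemma unifies_sc : forall s1 s2 L1 L2, unifies (sc s1 s2) L1 L2 <-> unifies s2 (map (tsubst s1) L1) (map (tsubst s1) L2).
Proof. unfold unifies; intros; rewrite !map_tsubst_comp; tauto. Qed.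

Lemma unifies_app : forall s A B A' B', length A = length B ->
  (unifies s (A ++ A') (B ++ B') <-> unifies s A B /\ unifies s A' B').
Proof.
  unfold unifies; induction A; destruct B; simpl; intros; try discriminate. tauto.
  injection H; intros. split.
  - intros Heq; injection Heq; intros. apply IHA in H1; auto. destruct H1; split; congruence.
  - intros [H1 H2]. injection H1; intros. f_equal; auto. apply IHA; auto.
Qed.

Lemma MG_compose : forall t1 t2 A1 B1 A2 B2, MG t1 A1 B1 -> MG t2 (map (tsubst t1) A2) (map (tsubst t1) B2) ->
  MG (sc t1 t2) (A1 ++ A2) (B1 ++ B2).
Proof.
  intros t1 t2 A1 B1 A2 B2 [U1 M1] [U2 M2].
  assert (Hl : length A1 = length B1) by (eapply unifies_length; eauto).
  split.
  - apply unifies_app; auto. split. apply unifies_sc. unfold unifies in *; rewrite U1; auto.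
    apply unifies_sc; auto.
  - intros s Hs. apply unifies_app in Hs; auto. destruct Hs as [Hs1 Hs2].
    destruct (M1 s Hs1) as [e1 He1].
    assert (unifies e1 (map (tsubst t1) A2) (map (tsubst t1) B2)).
    { apply unifies_sc. unfold unifies in *. rewrite <- !(map_tsubst_ext _ s (sc t1 e1)) by (intros; apply He1). auto. }
    destruct (M2 e1 H) as [e2 He2]. exists e2. intros x. rewrite He1. unfold sc. rewrite tsubst_comp.
    apply tsubst_ext. intros; apply He2.
Qed.

Lemma MG_equiv : forall a L1 L2 L1' L2', (forall s, unifies s L1 L2 <-> unifies s L1' L2') -> MG a L1 L2 -> MG a L1' L2'.
Proof. intros a L1 L2 L1' L2' H [H1 H2]; split. apply H; auto. intros; apply H2, H; auto. Qed.

Lemma map_sc_id : forall L e e', (forall x, In x (lvars L) -> tsubst e' (e x) = Var x) ->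
  map (tsubst e') (map (tsubst e) L) = L.
Proof.
  intros. rewrite map_tsubst_comp. rewrite (map_tsubst_ext _ _ Var) by auto.
  rewrite <- (map_id L) at 2. apply map_ext, tsubst_id.
Qed.

Lemma gsubst_sc_id : forall G e e', (forall x, In x (gvars G) -> tsubst e' (e x) = Var x) ->
  gsubst e' (gsubst e G) = G.
Proof. intros. rewrite gsubst_comp, (gsubst_ext _ _ Var) by auto. apply gsubst_id. Qed.

Lemma MGI_exists : forall th L1 L2 e1 e1', is_mgu th L1 L2 ->
  (forall x, In x (lvars L1 ++ lvars L2) -> tsubst e1' (e1 x) = Var x) ->
  exists th', is_mgu th' (map (tsubst e1) L1) (map (tsubst e1) L2).
Proof.
  intros. apply mgu_exists. exists (sc e1' th). apply unifies_sc.
  rewrite !map_sc_id; [apply H| |]; intros; apply H0, in_app_iff; auto.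
Qed.

Lemma MGI_core : forall th th' L1 L2 X e1 e1', is_mgu th L1 L2 ->
  (forall x, In x (gvars X ++ lvars L1 ++ lvars L2) -> tsubst e1' (e1 x) = Var x) ->
  is_mgu th' (map (tsubst e1) L1) (map (tsubst e1) L2) ->
  exists a b, gsubst th' (gsubst e1 X) = gsubst a (gsubst th X) /\
    forall x, In x (gvars (gsubst th X)) -> tsubst b (a x) = Var x.
Proof.
  intros th th' L1 L2 X e1 e1' Hth Hid Hth'.
  destruct Hth as [U [Mg _]]. destruct Hth' as [U' [Mg' _]].
  destruct (Mg (sc e1 th')) as [a Ha]. { apply unifies_sc; auto. }
  destruct (Mg' (sc e1' th)) as [b Hb].
  { apply unifies_sc. rewrite !map_sc_id; [apply U| |]; intros; apply Hid; rewrite !in_app_iff; auto. }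
  exists a, b. assert (E1 : gsubst th' (gsubst e1 X) = gsubst a (gsubst th X)).
  { rewrite !gsubst_comp. apply gsubst_ext. intros; rewrite Ha; auto. }
  split; auto.
  assert (gsubst b (gsubst a (gsubst th X)) = gsubst th X).
  { rewrite <- E1. rewrite <- (gsubst_sc_id X e1 e1') at 2 by (intros; apply Hid, in_app_iff; auto).
    rewrite !gsubst_comp. rewrite <- (gsubst_comp X e1 (sc th' b)), <- (gsubst_comp X e1 (sc e1' th)).
    apply gsubst_ext. intros y _. rewrite Hb. reflexivity. }
  rewrite gsubst_comp in H. intros. apply (gsubst_fix _ _ H); auto.
Qed.

Lemma cvars_ren : forall C r f, (forall x, r x = Var (f x)) ->
  forall y, In y (cvars (csubst r C)) <-> exists u, In u (cvars C) /\ y = f u.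
Proof.
  intros. unfold cvars, csubst; simpl. rewrite !in_app_iff, lvars_subst, gvars_subst.
  split.
  - intros [[x [Hx Hy]]|[x [Hx Hy]]]; rewrite H in Hy; simpl in Hy; destruct Hy as [<-|[]]; exists x; rewrite in_app_iff; auto.
  - intros [u [Hu ->]]. apply in_app_iff in Hu; destruct Hu; [left|right]; exists u; rewrite H; simpl; auto.
Qed.

Lemma fresh_ren : forall (C : clause) (V : list nat), exists r, renaming r /\ disjoint (cvars (csubst r C)) V.
Proof.
  intros. set (N := S (list_max (V ++ cvars C))).
  set (f := fun x => if x <? N then x + N else if x <? N + N then x - N else x).
  assert (Hinj : forall x y, f x = f y -> x = y).
  { unfold f; intros x y. destruct (Nat.ltb_spec x N), (Nat.ltb_spec y N), (Nat.ltb_spec x (N+N)), (Nat.ltb_spec y (N+N)); lia. }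
  exists (fun x => Var (f x)). split.
  - exists f. split; auto. split; auto. intros y. unfold f.
    destruct (Nat.ltb_spec y N). exists (y + N). destruct (Nat.ltb_spec (y+N) N); try lia. destruct (Nat.ltb_spec (y+N) (N+N)); lia.
    destruct (Nat.ltb_spec y (N+N)). exists (y - N). destruct (Nat.ltb_spec (y-N) N); lia.
    exists y. destruct (Nat.ltb_spec y N); try lia. destruct (Nat.ltb_spec y (N+N)); lia.
  - intros y Hy HV. apply (cvars_ren C _ f) in Hy; auto. destruct Hy as [u [Hu ->]].
    assert (u < N /\ forall v, In v V -> v < N).
    { assert (Hm := list_max_le (V ++ cvars C) (list_max (V ++ cvars C))). destruct Hm as [Hm _].
      specialize (Hm (le_n _)). rewrite Forall_forall in Hm. split. specialize (Hm u). 
      assert (u <= list_max (V ++ cvars C)) by (apply Hm, in_app_iff; auto). unfold N; lia.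
      intros v Hv. assert (v <= list_max (V ++ cvars C)) by (apply Hm, in_app_iff; auto). unfold N; lia. }
    destruct H as [H1 H2]. specialize (H2 _ HV). unfold f in H2. destruct (Nat.ltb_spec u N); lia.
Qed.

Lemma switch : forall (C : clause) f f' (V W : list nat) (e e' : subst),
  (forall x y, f x = f y -> x = y) -> (forall x y, f' x = f' y -> x = y) ->
  (forall u, In u (cvars C) -> ~ In (f u) V) -> (forall u, In u (cvars C) -> ~ In (f' u) W) ->
  exists e1 e1', (forall x, In x V -> e1 x = e x) /\ (forall u, In u (cvars C) -> e1 (f u) = Var (f' u)) /\
    (forall y, In y W -> e1' y = e' y) /\ (forall u, In u (cvars C) -> e1' (f' u) = Var (f u)).
Proof.
  intros C f f' V W e e' Hf Hf' HV HW.
  exists (fun x => match find (fun u => Nat.eqb (f u) x) (cvars C) with Some u => Var (f' u) | None => e x end).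
  exists (fun x => match find (fun u => Nat.eqb (f' u) x) (cvars C) with Some u => Var (f u) | None => e' x end).
  split; [|split; [|split]].
  - intros x Hx. destruct (find _ _) eqn:E; auto. apply find_some in E. destruct E as [E1 E2].
    apply Nat.eqb_eq in E2; subst. exfalso; eapply HV; eauto.
  - intros u Hu. destruct (find _ _) eqn:E. apply find_some in E. destruct E as [E1 E2].
    apply Nat.eqb_eq in E2. apply Hf in E2; subst; auto.
    eapply find_none in E; eauto. rewrite Nat.eqb_refl in E; discriminate.
  - intros x Hx. destruct (find _ _) eqn:E; auto. apply find_some in E. destruct E as [E1 E2].
    apply Nat.eqb_eq in E2; subst. exfalso; eapply HW; eauto.
  - intros u Hu. destruct (find _ _) eqn:E. apply find_some in E. destruct E as [E1 E2].
    apply Nat.eqb_eq in E2. apply Hf' in E2; subst; auto.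
    eapply find_none in E; eauto. rewrite Nat.eqb_refl in E; discriminate.
Qed.

Lemma bnb_subst : forall s G, bnb (gsubst s G) = bnb G.
Proof. destruct G as [|[] ?]; reflexivity. Qed.

Ltac push := lazymatch goal with |- Sx _ (gsubst ?e (?a :: ?G)) _ _ => change (gsubst e (a :: G)) with (asubst e a :: gsubst e G); cbn [asubst] end.

Lemma Sx_inst : forall P G n k, Sx P G n k -> forall e e', (forall x, In x (gvars G) -> tsubst e' (e x) = Var x) ->
  Sx P (gsubst e G) n k.
Proof.
  intros P G n k H. induction H; intros e e' He. constructor.
  inversion H as [t1 t2 G0 th Hm | t1 t2 G0 Hn | p ts G0 C rho th HC H3 H4 Hp Hm]; subst.
  -
    destruct (MGI_exists th [t1] [t2] e e') as [th' Hth']; auto.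
    { intros x Hx; apply He. unfold gvars, lvars in *; simpl in *. rewrite !app_nil_r in Hx. rewrite !in_app_iff in *. tauto. }
    destruct (MGI_core th th' [t1] [t2] G0 e e') as [a [b [E1 E2]]]; auto.
    { intros x Hx; apply He. unfold gvars, lvars in *; simpl in *. rewrite !app_nil_r in Hx. rewrite !in_app_iff in *. tauto. }
    push.
    eapply SxS'; [| |reflexivity]. apply step_eq. simpl in Hth'. eauto.
    rewrite E1. apply IHSx with b; auto.
  -
    push.
    eapply SxS'; [| |reflexivity]. apply step_neq. intros [s Hs]. apply Hn. exists (sc e s). apply unifies_sc; auto.
    apply (IHSx e e'). intros; apply He. apply gvars_cons; auto.
  -
    destruct H3 as [f [Hf1 [Hf2 _]]].
    destruct (fresh_ren C (gvars (gsubst e (APred (hd_pred C) ts :: G0)))) as [r' [Hr' Hd']].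
    pose proof Hr' as [f' [Hf1' [Hf2' _]]].
    destruct (switch C f f' (gvars (APred (hd_pred C) ts :: G0)) (gvars (gsubst e (APred (hd_pred C) ts :: G0))) e e')
      as [e1 [e1' [S1 [S2 [S3 S4]]]]]; auto.
    { intros u Hu Hin. apply (H4 (f u)); auto. apply (cvars_ren C rho f); eauto. }
    { intros u Hu Hin. apply (Hd' (f' u)); auto. apply (cvars_ren C r' f'); eauto. }
    set (X := bd (csubst rho C) ++ G0).
    assert (Hid : forall x, In x (gvars X ++ lvars ts ++ lvars (hd_args (csubst rho C))) -> tsubst e1' (e1 x) = Var x).
    { intros x Hx. assert (Hc : In x (gvars (APred (hd_pred C) ts :: G0)) \/ exists u, In u (cvars C) /\ x = f u).
      { unfold X in Hx. rewrite !in_app_iff, gvars_app in Hx. rewrite gvars_cons. simpl.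
        destruct Hx as [[Hx|Hx]|[Hx|Hx]]; auto.
        right. apply (cvars_ren C rho f); auto. unfold cvars; rewrite in_app_iff; auto.
        right. apply (cvars_ren C rho f); auto. unfold cvars; rewrite in_app_iff; auto. }
      destruct Hc as [Hc|[u [Hu ->]]].
      - rewrite S1 by auto. rewrite <- He by auto. apply tsubst_ext. intros y Hy. apply S3.
        apply gvars_subst. eauto.
      - rewrite S2 by auto. simpl. auto. }
    destruct (MGI_exists th ts (hd_args (csubst rho C)) e1 e1') as [th' Hth']; auto.
    { intros; apply Hid; rewrite in_app_iff; auto. }
    destruct (MGI_core th th' ts (hd_args (csubst rho C)) X e1 e1') as [a [b [E1 E2]]]; auto.
    assert (Hts : map (tsubst e1) ts = map (tsubst e) ts).
    { apply map_tsubst_ext. intros; apply S1. rewrite gvars_cons; simpl; auto. }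
    assert (Hhs : map (tsubst e1) (hd_args (csubst rho C)) = hd_args (csubst r' C)).
    { simpl. rewrite map_tsubst_comp. apply map_tsubst_ext. intros u Hu. unfold sc. rewrite Hf1. simpl.
      rewrite S2. rewrite Hf1'; auto.
      unfold cvars; rewrite in_app_iff; auto. }
    assert (HX : gsubst e1 X = bd (csubst r' C) ++ gsubst e G0).
    { unfold X. rewrite gsubst_app. f_equal.
      - simpl. rewrite gsubst_comp. apply gsubst_ext. intros u Hu. unfold sc. rewrite Hf1. simpl.
        rewrite S2. rewrite Hf1'; auto. unfold cvars; rewrite in_app_iff; auto.
      - apply gsubst_ext. intros; apply S1. rewrite gvars_cons; auto. }
    rewrite Hts, Hhs in Hth'. rewrite HX in E1.
    push.
    eapply SxS'; [| |reflexivity]. apply step_res with (C := C) (rho := r') (th := th'); auto.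
    rewrite E1. apply IHSx with b. auto.
Qed.


Definition AllEq (E : goal) := forall a, In a E -> exists t1 t2, a = AEq t1 t2.

Lemma AllEq_cons : forall a E, AllEq (a :: E) -> (exists t1 t2, a = AEq t1 t2) /\ AllEq E.
Proof. unfold AllEq; simpl; intros; split; auto. Qed.

Lemma AllEq_subst : forall s E, AllEq E -> AllEq (gsubst s E).
Proof.
  unfold AllEq, gsubst; intros. apply in_map_iff in H0. destruct H0 as [b [<- Hb]].
  destruct (H b Hb) as [t1 [t2 ->]]. simpl; eauto.
Qed.

Lemma gsubst_cons : forall s a G, gsubst s (a :: G) = asubst s a :: gsubst s G.
Proof. reflexivity. Qed.

Lemma Sx_nil : forall P n k, Sx P [] n k -> n = 0 /\ k = 0.
Proof. intros. inversion H; subst; auto. inversion H0. Qed.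

Lemma Sx_cons0 : forall P a X k, Sx P (a :: X) 0 k -> False.
Proof. intros. inversion H. Qed.

Lemma EqHead : forall P u1 u2 X n k, Sx P (AEq u1 u2 :: X) n k <->
  exists n' th, n = S n' /\ is_mgu th [u1] [u2] /\ Sx P (gsubst th X) n' k.
Proof.
  split.
  - intros H. inversion H; subst. inversion H0; subst. eauto.
  - intros [n' [th [-> [H1 H2]]]]. eapply SxS'. apply step_eq; eauto. eauto. reflexivity.
Qed.

Lemma NeqHead : forall P u1 u2 X n k, Sx P (ANeq u1 u2 :: X) n k <->
  exists n', n = S n' /\ ~ unifiable [u1] [u2] /\ Sx P X n' k.
Proof.
  split.
  - intros H. inversion H; subst. inversion H0; subst. eauto.
  - intros [n' [-> [H1 H2]]]. eapply SxS'. apply step_neq; eauto. eauto. reflexivity.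
Qed.

Lemma ResHead : forall P p ts X n k, Sx P (APred p ts :: X) n k <->
  exists n' k' C r th, n = S n' /\ k = S k' /\ P C /\ renaming r /\
    disjoint (cvars (csubst r C)) (gvars (APred p ts :: X)) /\ hd_pred C = p /\
    is_mgu th ts (hd_args (csubst r C)) /\ Sx P (gsubst th (bd (csubst r C) ++ X)) n' k'.
Proof.
  split.
  - intros H. inversion H; subst. inversion H0; subst. do 5 eexists.
    refine (conj eq_refl (conj eq_refl (conj _ (conj _ (conj _ (conj eq_refl (conj _ _))))))); eauto.
  - intros [n' [k' [C [r [th [-> [-> [H1 [H2 [H3 [H4 [H5 H6]]]]]]]]]]]]. eapply SxS'.
    subst p. apply step_res; eauto. eauto. reflexivity.
Qed.

Lemma MGswap : forall P a b L1 L2 Y n k, MG a L1 L2 -> MG b L1 L2 -> Sx P (gsubst a Y) n k -> Sx P (gsubst b Y) n k.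
Proof.
  intros P a b L1 L2 Y n k [Ua Ma] [Ub Mb] H.
  destruct (Ma b Ub) as [g1 Hg1]. destruct (Mb a Ua) as [g2 Hg2].
  assert (E1 : gsubst b Y = gsubst g1 (gsubst a Y)).
  { rewrite gsubst_comp. apply gsubst_ext; intros; apply Hg1. }
  assert (E2 : gsubst a Y = gsubst g2 (gsubst b Y)).
  { rewrite gsubst_comp. apply gsubst_ext; intros; apply Hg2. }
  rewrite E1. apply Sx_inst with g2; auto. intros x Hx.
  assert (gsubst (sc g1 g2) (gsubst a Y) = gsubst a Y) by (rewrite <- gsubst_comp, <- E1; auto).
  apply (gsubst_fix _ _ H0); auto.
Qed.

Lemma mgu_rel : forall th L1 L2 x, is_mgu th L1 L2 -> ~ In x (lvars L1 ++ lvars L2) -> th x = Var x.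
Proof.
  intros th L1 L2 x [_ [_ [_ R]]] H. destruct (classic (th x = Var x)); auto.
  exfalso; apply H, R; auto.
Qed.

Lemma mgu_vars : forall th L1 L2 Z y, is_mgu th L1 L2 -> In y (gvars (gsubst th Z)) ->
  In y (gvars Z) \/ In y (lvars L1 ++ lvars L2).
Proof.
  intros. apply gvars_subst in H0. destruct H0 as [x [Hx Hy]].
  destruct (classic (th x = Var x)). rewrite H0 in Hy; simpl in Hy; destruct Hy as [<-|[]]; auto.
  destruct H as [_ [_ [_ R]]]. right. apply (proj2 (R x H0)); auto.
Qed.

Lemma mgu_notin : forall th L1 L2 Z x, is_mgu th L1 L2 -> ~ In x (lvars L1 ++ lvars L2) -> ~ In x (gvars Z) ->
  ~ In x (gvars (gsubst th Z)).
Proof. intros. intro. destruct (mgu_vars th L1 L2 Z x H H2); tauto. Qed.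

Lemma gsubst_disj : forall th L1 L2 Z, is_mgu th L1 L2 -> (forall x, In x (gvars Z) -> ~ In x (lvars L1 ++ lvars L2)) ->
  gsubst th Z = Z.
Proof.
  intros. rewrite <- (gsubst_id Z) at 2. apply gsubst_ext. intros; eapply mgu_rel; eauto.
Qed.

Lemma mapsubst_disj : forall th L1 L2 Z, is_mgu th L1 L2 -> (forall x, In x (lvars Z) -> ~ In x (lvars L1 ++ lvars L2)) ->
  map (tsubst th) Z = Z.
Proof.
  intros. rewrite <- (map_id Z) at 2. rewrite <- (map_ext (tsubst Var) id) by apply tsubst_id.
  apply map_tsubst_ext. intros; eapply mgu_rel; eauto.
Qed.

Lemma unif_swap1 : forall s a b L1 L2, length L1 = length L2 ->
  (unifies s ([a] ++ L1) ([b] ++ L2) <-> unifies s (L1 ++ [a]) (L2 ++ [b])).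
Proof.
  intros. rewrite !unifies_app by (simpl; auto). tauto.
Qed.

Lemma unifies_ext : forall s s' L1 L2, (forall x, s x = s' x) -> unifies s L1 L2 -> unifies s' L1 L2.
Proof.
  unfold unifies; intros. rewrite <- !(map_tsubst_ext _ s s') by auto. auto.
Qed.

Lemma EqComm : forall P u1 u2 v1 v2 X n k, Sx P (AEq u1 u2 :: AEq v1 v2 :: X) n k -> Sx P (AEq v1 v2 :: AEq u1 u2 :: X) n k.
Proof.
  intros. apply EqHead in H. destruct H as [n1 [t1 [-> [Ht1 H]]]].
  rewrite gsubst_cons in H. cbn [asubst] in H. apply EqHead in H. destruct H as [n2 [t2 [-> [Ht2 H]]]].
  assert (M12 : MG (sc t1 t2) ([u1] ++ [v1]) ([u2] ++ [v2])).
  { apply MG_compose; apply mgu_MG; auto. }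
  destruct (mgu_exists [v1] [v2]) as [s2 Hs2].
  { exists (sc t1 t2). apply (unifies_app _ [u1] [u2] [v1] [v2]); auto. apply (proj1 M12). }
  destruct (proj2 (mgu_MG _ _ _ Hs2) (sc t1 t2)) as [e He].
  { apply (unifies_app _ [u1] [u2]); auto. apply (proj1 M12). }
  destruct (mgu_exists [tsubst s2 u1] [tsubst s2 u2]) as [s1 Hs1].
  { exists e. change (unifies e (map (tsubst s2) [u1]) (map (tsubst s2) [u2])). apply unifies_sc.
    apply unifies_ext with (sc t1 t2). intros; rewrite He; reflexivity.
    apply (unifies_app _ [u1] [u2] [v1] [v2]); auto. apply (proj1 M12). }
  assert (M21 : MG (sc s2 s1) ([u1] ++ [v1]) ([u2] ++ [v2])).
  { apply MG_equiv with ([v1] ++ [u1]) ([v2] ++ [u2]).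
    intros; rewrite !unifies_app by reflexivity; tauto.
    apply MG_compose; apply mgu_MG; auto. }
  rewrite gsubst_comp in H. apply (MGswap _ _ _ _ _ _ _ _ M12 M21) in H.
  apply EqHead. exists (S n2), s2. split; auto. split; auto. rewrite gsubst_cons. cbn [asubst].
  apply EqHead. exists n2, s1. split; auto. split; auto. rewrite gsubst_comp; auto.
Qed.

Lemma EqMove : forall P E, AllEq E -> forall u1 u2 H n k,
  Sx P (E ++ AEq u1 u2 :: H) n k <-> Sx P (AEq u1 u2 :: E ++ H) n k.
Proof.
  intros P E. remember (length E) as m. revert E Heqm. induction m as [|m IHm]; intros E Hm.
  { destruct E; try discriminate. simpl; tauto. }
  destruct E as [|e E']; try discriminate. injection Hm; intros Hm'.
  assert (IH : forall E'', length E'' = length E' -> AllEq E'' -> forall u1 u2 H n k, Sx P (E'' ++ AEq u1 u2 :: H) n k <-> Sx P (AEq u1 u2 :: E'' ++ H) n k).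
  { intros; apply IHm; auto. congruence. }
  intros HE u1 u2 H n k.
  apply AllEq_cons in HE. destruct HE as [[v1 [v2 ->]] HE].
  assert (Sx P ((AEq v1 v2 :: E') ++ AEq u1 u2 :: H) n k <-> Sx P (AEq v1 v2 :: AEq u1 u2 :: E' ++ H) n k).
  { simpl. rewrite !EqHead. split; intros [n' [th [-> [Hth HS]]]]; exists n', th; (split; [reflexivity|split; [exact Hth|]]).
    - rewrite gsubst_cons, gsubst_app. rewrite gsubst_app, gsubst_cons in HS. cbn [asubst] in *.
      rewrite <- IH by (try apply AllEq_subst; auto; apply length_map). auto.
    - rewrite gsubst_cons, gsubst_app in HS. rewrite gsubst_app, gsubst_cons. cbn [asubst] in *.
      rewrite IH by (try apply AllEq_subst; auto; apply length_map). auto. }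
  rewrite H0. split; apply EqComm.
Qed.

Lemma DiseqMove : forall P E, AllEq E -> forall t1 t2 H n k,
  (forall x, In x (tvars t1 ++ tvars t2) -> ~ In x (gvars E)) ->
  (Sx P (E ++ ANeq t1 t2 :: H) n k <-> Sx P (ANeq t1 t2 :: E ++ H) n k).
Proof.
  intros P E. remember (length E) as m. revert E Heqm. induction m as [|m IHm]; intros E Hm.
  { destruct E; try discriminate. simpl; tauto. }
  destruct E as [|e E']; try discriminate. injection Hm; intros Hm'.
  assert (IH : forall E'', length E'' = length E' -> AllEq E'' -> forall t1 t2 H n k,
    (forall x, In x (tvars t1 ++ tvars t2) -> ~ In x (gvars E'')) ->
    (Sx P (E'' ++ ANeq t1 t2 :: H) n k <-> Sx P (ANeq t1 t2 :: E'' ++ H) n k)).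
  { intros; apply IHm; auto. congruence. }
  intros HE t1 t2 H n k Hd.
  apply AllEq_cons in HE. destruct HE as [[v1 [v2 ->]] HE].
  assert (Hdisj : forall th, is_mgu th [v1] [v2] -> asubst th (ANeq t1 t2) = ANeq t1 t2 /\
      forall x, In x (tvars t1 ++ tvars t2) -> ~ In x (gvars (gsubst th E'))).
  { intros th Hth. assert (forall x, In x (tvars t1 ++ tvars t2) -> ~ In x (lvars [v1] ++ lvars [v2])).
    { intros x Hx Hin. apply (Hd x Hx). rewrite gvars_cons. left. simpl. unfold lvars in Hin; simpl in Hin.
      rewrite !app_nil_r in Hin; auto. }
    split.
    - pose proof (gsubst_disj th [v1] [v2] [ANeq t1 t2] Hth). simpl in H1. unfold gvars in H1; simpl in H1.
      rewrite app_nil_r in H1. specialize (H1 H0). simpl; injection H1; congruence.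
    - intros x Hx. apply mgu_notin with ([v1]) ([v2]); auto. intro; apply (Hd x Hx). rewrite gvars_cons; auto. }
  simpl. split.
  - intros HS. apply EqHead in HS. destruct HS as [n' [th [-> [Hth HS]]]].
    destruct (Hdisj th Hth) as [Hfix Hv].
    rewrite gsubst_app, gsubst_cons, Hfix in HS. rewrite IH in HS by (try apply AllEq_subst; auto; apply length_map).
    apply NeqHead in HS. destruct HS as [n'' [-> [Hn HS]]].
    apply NeqHead. exists (S n''). split; auto. split; auto. apply EqHead. exists n'', th. rewrite gsubst_app. auto.
  - intros HS. apply NeqHead in HS. destruct HS as [m0 [-> [Hn HS]]].
    apply EqHead in HS. destruct HS as [n' [th [-> [Hth HS]]]].
    destruct (Hdisj th Hth) as [Hfix Hv].
    apply EqHead. exists (S n'), th. split; auto. split; auto.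
    rewrite gsubst_app, gsubst_cons, Hfix. rewrite IH by (try apply AllEq_subst; auto; apply length_map).
    apply NeqHead. exists n'. rewrite <- gsubst_app. auto.
Qed.


Lemma cvars_hd : forall C x, In x (lvars (hd_args C)) -> In x (cvars C).
Proof. intros; unfold cvars; apply in_app_iff; auto. Qed.
Lemma cvars_bd : forall C x, In x (gvars (bd C)) -> In x (cvars C).
Proof. intros; unfold cvars; apply in_app_iff; auto. Qed.

Lemma RAny : forall P C r r' p ts th F H n k, renaming r -> renaming r' ->
  disjoint (cvars (csubst r C)) (gvars (APred p ts :: F ++ H)) ->
  disjoint (cvars (csubst r' C)) (gvars (APred p ts :: F ++ H)) ->
  is_mgu th ts (hd_args (csubst r C)) -> Sx P (gsubst th (F ++ bd (csubst r C) ++ H)) n k ->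
  exists th', is_mgu th' ts (hd_args (csubst r' C)) /\ Sx P (gsubst th' (F ++ bd (csubst r' C) ++ H)) n k.
Proof.
  intros P C r r' p ts th F H n k [f [Hf1 [Hf2 _]]] [f' [Hf1' [Hf2' _]]] Hd Hd' Hth HS.
  set (V := gvars (APred p ts :: F ++ H)).
  destruct (switch C f f' V V Var Var) as [e1 [e1' [S1 [S2 [S3 S4]]]]]; auto.
  { intros u Hu Hin. apply (Hd (f u)); auto. apply (cvars_ren C r f); eauto. }
  { intros u Hu Hin. apply (Hd' (f' u)); auto. apply (cvars_ren C r' f'); eauto. }
  set (X := F ++ bd (csubst r C) ++ H).
  assert (Hid : forall x, In x (gvars X ++ lvars ts ++ lvars (hd_args (csubst r C))) -> tsubst e1' (e1 x) = Var x).
  { intros x Hx. assert (Hc : In x V \/ exists u, In u (cvars C) /\ x = f u).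
    { assert (In x (lvars ts) \/ In x (gvars F) \/ In x (gvars H) \/ In x (gvars (bd (csubst r C))) \/ In x (lvars (hd_args (csubst r C)))) as Hx'
        by (unfold X in Hx; rewrite !in_app_iff, !gvars_app in Hx; tauto).
      assert (HV : In x (lvars ts) \/ In x (gvars F) \/ In x (gvars H) -> In x V)
        by (intros; unfold V; rewrite gvars_cons, gvars_app; simpl; tauto).
      destruct Hx' as [?|[?|[?|[?|?]]]]; try (left; apply HV; tauto); right; apply (cvars_ren C r f); auto.
      apply cvars_bd; auto. apply cvars_hd; auto. }
    destruct Hc as [Hc|[u [Hu ->]]].
    - rewrite S1 by auto. simpl. apply S3; auto.
    - rewrite S2 by auto. simpl. auto. }
  destruct (MGI_exists th ts (hd_args (csubst r C)) e1 e1') as [th' Hth']; auto.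
  { intros; apply Hid; rewrite in_app_iff; auto. }
  destruct (MGI_core th th' ts (hd_args (csubst r C)) X e1 e1') as [a [b [E1 E2]]]; auto.
  assert (Hts : map (tsubst e1) ts = ts).
  { rewrite <- (map_id ts) at 2. rewrite <- (map_ext (tsubst Var) id) by apply tsubst_id.
    apply map_tsubst_ext. intros; apply S1. unfold V; rewrite gvars_cons; simpl; auto. }
  assert (Hhs : map (tsubst e1) (hd_args (csubst r C)) = hd_args (csubst r' C)).
  { simpl. rewrite map_tsubst_comp. apply map_tsubst_ext. intros u Hu. unfold sc. rewrite Hf1. simpl.
    rewrite S2, Hf1'; auto. apply cvars_hd; auto. }
  assert (HX : gsubst e1 X = F ++ bd (csubst r' C) ++ H).
  { unfold X. rewrite !gsubst_app. f_equal; [|f_equal].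
    - rewrite <- (gsubst_id F) at 2. apply gsubst_ext. intros; apply S1. unfold V; rewrite gvars_cons, gvars_app; auto.
    - simpl. rewrite gsubst_comp. apply gsubst_ext. intros u Hu. unfold sc. rewrite Hf1. simpl.
      rewrite S2, Hf1'; auto. apply cvars_bd; auto.
    - rewrite <- (gsubst_id H) at 2. apply gsubst_ext. intros; apply S1. unfold V; rewrite gvars_cons, gvars_app; auto. }
  rewrite Hts, Hhs in Hth'. rewrite HX in E1. exists th'. split; auto.
  rewrite E1. apply Sx_inst with b; auto.
Qed.

Lemma gvars_subst_mgu_incl : forall th L1 L2 Z y, is_mgu th L1 L2 -> In y (gvars (gsubst th Z)) ->
  In y (gvars Z) \/ In y (lvars L1 ++ lvars L2).
Proof. intros; eapply mgu_vars; eauto. Qed.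

Lemma lv1 : forall t, lvars [t] = tvars t.
Proof. intros; unfold lvars; simpl; apply app_nil_r. Qed.

Lemma ResMove : forall P E, AllEq E -> forall p ts K n k,
  Sx P (E ++ APred p ts :: K) n k <->
  exists n' k' C r th, n = S n' /\ k = S k' /\ P C /\ renaming r /\
    disjoint (cvars (csubst r C)) (gvars (APred p ts :: E ++ K)) /\ hd_pred C = p /\
    is_mgu th ts (hd_args (csubst r C)) /\ Sx P (gsubst th (E ++ bd (csubst r C) ++ K)) n' k'.
Proof.
  intros P E. remember (length E) as m. revert E Heqm. induction m as [|m IHm]; intros E Hm.
  { destruct E; try discriminate. intros. simpl. apply ResHead. }
  destruct E as [|e E']; try discriminate. injection Hm; intros Hm'.
  intros HE. apply AllEq_cons in HE. destruct HE as [[u1 [u2 ->]] HE].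
  assert (IH : forall E'', length E'' = length E' -> AllEq E'' -> forall p ts K n k,
    Sx P (E'' ++ APred p ts :: K) n k <->
    exists n' k' C r th, n = S n' /\ k = S k' /\ P C /\ renaming r /\
      disjoint (cvars (csubst r C)) (gvars (APred p ts :: E'' ++ K)) /\ hd_pred C = p /\
      is_mgu th ts (hd_args (csubst r C)) /\ Sx P (gsubst th (E'' ++ bd (csubst r C) ++ K)) n' k').
  { intros; apply IHm; auto. congruence. }
  clear IHm. intros p ts K n k.
  assert (Hsmall : forall s r C, is_mgu s [u1] [u2] ->
     disjoint (cvars (csubst r C)) (gvars (APred p ts :: (AEq u1 u2 :: E') ++ K)) ->
     disjoint (cvars (csubst r C)) (gvars (APred p (map (tsubst s) ts) :: gsubst s E' ++ gsubst s K)) /\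
     gsubst s (bd (csubst r C)) = bd (csubst r C) /\
     map (tsubst s) (hd_args (csubst r C)) = hd_args (csubst r C)).
  { intros s r C Hs Hd. assert (Hn : forall x, In x (cvars (csubst r C)) -> ~ In x (lvars [u1] ++ lvars [u2])).
    { intros x Hx Hin. apply (Hd x Hx). change (In x (gvars (APred p ts :: AEq u1 u2 :: (E' ++ K)))). rewrite !gvars_cons. right; left. simpl. rewrite !lv1 in Hin. exact Hin. }
    split; [|split].
    - intros x Hx Hin. rewrite <- gsubst_app in Hin. change (APred p (map (tsubst s) ts) :: gsubst s (E' ++ K))
        with (gsubst s (APred p ts :: E' ++ K)) in Hin.
      apply (gvars_subst_mgu_incl _ _ _ _ _ Hs) in Hin. destruct Hin as [Hin|Hin].
      + apply (Hd x Hx). change (In x (gvars (APred p ts :: AEq u1 u2 :: (E' ++ K)))).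
        rewrite !gvars_cons in *. tauto.
      + apply (Hn x Hx Hin).
    - apply (gsubst_disj _ _ _ _ Hs). intros; apply Hn; auto. apply cvars_bd; auto.
    - apply (mapsubst_disj _ _ _ _ Hs). intros; apply Hn; auto. apply cvars_hd; auto. }
  set (a := APred p ts). simpl (_ ++ _).
  split.
  - intros HS. apply EqHead in HS. destruct HS as [n1 [s [-> [Hs HS]]]].
    rewrite gsubst_app, gsubst_cons in HS. cbn [asubst] in HS.
    apply IH in HS; [|apply length_map|apply AllEq_subst; auto].
    destruct HS as [n' [k' [C [r1 [th1 [-> [-> [HC [Hr1 [Hd1 [Hp [Hth1 HS]]]]]]]]]]]].
    destruct (fresh_ren C (gvars (a :: AEq u1 u2 :: E' ++ K))) as [r [Hr Hd]].
    destruct (Hsmall s r C Hs Hd) as [Hd2 [Hb Hh]].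
    destruct (RAny P C r1 r p (map (tsubst s) ts) th1 (gsubst s E') (gsubst s K) n' k' Hr1 Hr Hd1 Hd2 Hth1 HS) as [th2 [Hth2 HS2]].
    set (Y := E' ++ bd (csubst r C) ++ K).
    assert (HY : Sx P (gsubst (sc s th2) Y) n' k').
    { rewrite <- gsubst_comp. unfold Y. rewrite (gsubst_app s), (gsubst_app s), Hb. auto. }
    assert (M1 : MG (sc s th2) ([u1] ++ ts) ([u2] ++ hd_args (csubst r C))).
    { apply MG_compose. apply mgu_MG; auto. rewrite Hh. apply mgu_MG; auto. }
    assert (Hl : length ts = length (hd_args (csubst r C))).
    { destruct Hth2 as [U _]. apply unifies_length in U. rewrite length_map in U; auto. }
    destruct (mgu_exists ts (hd_args (csubst r C))) as [th0 Hth0].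
    { exists (sc s th2). apply (unifies_app _ [u1] [u2]); auto. apply (proj1 M1). }
    destruct (proj2 (mgu_MG _ _ _ Hth0) (sc s th2)) as [e He].
    { apply (unifies_app _ [u1] [u2]); auto. apply (proj1 M1). }
    destruct (mgu_exists [tsubst th0 u1] [tsubst th0 u2]) as [s2 Hs2].
    { exists e. change (unifies e (map (tsubst th0) [u1]) (map (tsubst th0) [u2])). apply unifies_sc.
      apply unifies_ext with (sc s th2). intros; rewrite He; reflexivity.
      apply (unifies_app _ [u1] [u2] ts (hd_args (csubst r C))); auto. apply (proj1 M1). }
    assert (M2 : MG (sc th0 s2) ([u1] ++ ts) ([u2] ++ hd_args (csubst r C))).
    { apply MG_equiv with (ts ++ [u1]) (hd_args (csubst r C) ++ [u2]).
      intros; rewrite !unifies_app by auto; tauto.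
      apply MG_compose; apply mgu_MG; auto. }
    apply (MGswap _ _ _ _ _ _ _ _ M1 M2) in HY.
    exists (S n'), k', C, r, th0. split; [reflexivity|split;[reflexivity|]].
    split; auto. split; auto. split. { intros x Hx Hin; apply (Hd x Hx). unfold a. simpl. auto. }
    split; auto. split; auto.
    rewrite gsubst_cons. cbn [asubst]. apply EqHead. exists n', s2. split; auto. split; auto.
    rewrite gsubst_comp; auto.
  - intros [n0 [k' [C [r [th0 [-> [-> [HC [Hr [Hd [Hp [Hth0 HS]]]]]]]]]]]].
    rewrite gsubst_cons in HS. cbn [asubst] in HS. apply EqHead in HS. destruct HS as [n' [s2 [-> [Hs2 HS]]]].
    set (Y := E' ++ bd (csubst r C) ++ K) in *.
    assert (Hl : length ts = length (hd_args (csubst r C))).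
    { destruct Hth0 as [U _]. apply unifies_length in U; auto. }
    assert (M2 : MG (sc th0 s2) ([u1] ++ ts) ([u2] ++ hd_args (csubst r C))).
    { apply MG_equiv with (ts ++ [u1]) (hd_args (csubst r C) ++ [u2]).
      intros; rewrite !unifies_app by auto; tauto.
      apply MG_compose; apply mgu_MG; auto. }
    destruct (mgu_exists [u1] [u2]) as [s Hs].
    { exists (sc th0 s2). apply (unifies_app _ [u1] [u2] ts (hd_args (csubst r C))); auto. apply (proj1 M2). }
    destruct (Hsmall s r C Hs) as [Hd2 [Hb Hh]]. { intros x Hx Hin; apply (Hd x Hx). auto. }
    destruct (proj2 (mgu_MG _ _ _ Hs) (sc th0 s2)) as [e He].
    { apply (unifies_app _ [u1] [u2] ts (hd_args (csubst r C))); auto. apply (proj1 M2). }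
    destruct (mgu_exists (map (tsubst s) ts) (hd_args (csubst r C))) as [th2 Hth2].
    { exists e. rewrite <- Hh. apply unifies_sc.
      apply unifies_ext with (sc th0 s2). intros; rewrite He; reflexivity.
      apply (unifies_app _ [u1] [u2] ts (hd_args (csubst r C))); auto. apply (proj1 M2). }
    assert (M1 : MG (sc s th2) ([u1] ++ ts) ([u2] ++ hd_args (csubst r C))).
    { apply MG_compose. apply mgu_MG; auto. rewrite Hh. apply mgu_MG; auto. }
    rewrite gsubst_comp in HS. apply (MGswap _ _ _ _ _ _ _ _ M2 M1) in HS.
    apply EqHead. exists (S n'), s. split; auto. split; auto.
    rewrite gsubst_app, gsubst_cons. cbn [asubst].
    apply IH; [apply length_map|apply AllEq_subst; auto|].
    exists n', k', C, r, th2. split; [reflexivity|split;[reflexivity|]].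
    split; auto. split; auto. split; auto. split; auto. split; auto.
    rewrite <- gsubst_comp in HS. unfold Y in HS. change (gsubst r (bd C)) with (bd (csubst r C)) in HS.
    rewrite (gsubst_app s), (gsubst_app s), Hb in HS. auto.
Qed.


Definition Cons (P : program) (M : mode) (G : goal) :=
  forall rest, derivation P (G :: rest) -> consistent_with M (G :: rest).

Lemma ConsStep : forall P M G G', Cons P M G -> step P G G' -> Cons P M G'.
Proof.
  intros P M G G' HC Hs rest Hd. assert (Hd' : derivation P (G :: G' :: rest)).
  { intros [|i] Hi; simpl; auto. apply Hd. simpl in *; lia. }
  intros i p ts K Hi Hn. apply (HC _ Hd' (S i) p ts K); simpl in *; auto. lia.
Qed.

Lemma ConsHead : forall P M p ts X G', Cons P M (APred p ts :: X) -> step P (APred p ts :: X) G' ->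
  atom_satisfies M (APred p ts).
Proof.
  intros. apply (H [G'] ) with 0 X; simpl; auto.
  intros [|i] Hi; simpl in *; auto; lia.
Qed.

Definition Priv (G1 R : goal) := forall A B t1 t2, G1 = A ++ ANeq t1 t2 :: B ->
  forall x, In x (tvars t1 ++ tvars t2) -> ~ In x (gvars (A ++ B ++ R)).

Definition NoDiseq (G : goal) := forall t1 t2, ~ In (ANeq t1 t2) G.

Lemma gvars_cons_app : forall d A L x, In x (gvars ((d :: A) ++ L)) <-> In x (avars d) \/ In x (gvars (A ++ L)).
Proof. intros. apply gvars_cons. Qed.

Lemma Priv_nodiseq : forall G1 R, NoDiseq G1 -> Priv G1 R.
Proof. intros G1 R H A B t1 t2 -> . exfalso; apply (H t1 t2). apply in_or_app; simpl; auto. Qed.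

Lemma Priv_tail : forall d G1 R, Priv (d :: G1) R -> Priv G1 R.
Proof.
  intros d G1 R H A B t1 t2 -> x Hx Hin. apply (H (d :: A) B t1 t2 eq_refl x Hx).
  rewrite gvars_cons_app; auto.
Qed.

Lemma Priv_head : forall t1 t2 G1 E G2, Priv (ANeq t1 t2 :: G1) (E ++ G2) ->
  forall x, In x (tvars t1 ++ tvars t2) -> ~ In x (gvars E).
Proof.
  intros. intro Hin. apply (H [] G1 t1 t2 eq_refl x H0). simpl. rewrite !gvars_app; auto.
Qed.

Lemma decomp_subst : forall s G A' B' t1' t2', gsubst s G = A' ++ ANeq t1' t2' :: B' ->
  exists A B t1 t2, G = A ++ ANeq t1 t2 :: B /\ gsubst s A = A' /\ gsubst s B = B' /\
    tsubst s t1 = t1' /\ tsubst s t2 = t2'.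
Proof.
  intros. unfold gsubst in H. apply map_eq_app in H. destruct H as [A [L [-> [HA HL]]]].
  apply map_eq_cons in HL. destruct HL as [d [B [-> [Hd HB]]]].
  destruct d; simpl in Hd; try discriminate. injection Hd; intros.
  exists A, B, t1, t2. auto.
Qed.

Lemma vars_neq_subst : forall s t1 t2 x, In x (tvars (tsubst s t1) ++ tvars (tsubst s t2)) ->
  exists y, In y (tvars t1 ++ tvars t2) /\ In x (tvars (s y)).
Proof.
  intros. apply in_app_or in H. destruct H as [H|H]; apply tvars_subst in H; destruct H as [y [Hy Hx]];
  exists y; rewrite in_app_iff; auto.
Qed.

Lemma PrivEq : forall u1 u2 G1 R th, Priv (AEq u1 u2 :: G1) R -> is_mgu th [u1] [u2] ->
  Priv (gsubst th G1) (gsubst th R).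
Proof.
  intros u1 u2 G1 R th HP Hth A' B' t1' t2' Heq x Hx.
  apply decomp_subst in Heq. destruct Heq as [A [B [t1 [t2 [-> [<- [<- [<- <-]]]]]]]].
  apply vars_neq_subst in Hx. destruct Hx as [y [Hy Hx]].
  pose proof (HP (AEq u1 u2 :: A) B t1 t2 eq_refl y Hy) as Hn.
  assert (Hy' : ~ In y (lvars [u1] ++ lvars [u2])).
  { intro Hin. apply Hn. rewrite gvars_cons_app. left. simpl. rewrite !lv1 in Hin. auto. }
  rewrite (mgu_rel _ _ _ _ Hth Hy') in Hx. simpl in Hx. destruct Hx as [<-|[]].
  rewrite <- !gsubst_app. apply mgu_notin with [u1] [u2]; auto.
  intro; apply Hn; rewrite gvars_cons_app; auto.
Qed.

Lemma input_args_map : forall g ms l, input_args ms (map g l) = map g (input_args ms l).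
Proof.
  unfold input_args. induction ms; destruct l; simpl; auto. destruct a; simpl; f_equal; auto.
Qed.

Lemma split_at : forall (A : list atom) d B, nth_error (A ++ d :: B) (length A) = Some d /\
  firstn (length A) (A ++ d :: B) = A /\ skipn (S (length A)) (A ++ d :: B) = B.
Proof. induction A; simpl; intros; auto. destruct (IHA d B) as [? [? ?]]. split; auto. split. congruence. exact H1. Qed.

Lemma ren_vars_g : forall r f L y, (forall x, r x = Var (f x)) -> In y (gvars (gsubst r L)) -> exists u, In u (gvars L) /\ y = f u.
Proof.
  intros. apply gvars_subst in H0. destruct H0 as [u [Hu Hy]]. rewrite H in Hy. simpl in Hy.
  destruct Hy as [<-|[]]; eauto.
Qed.

Lemma ren_vars_l : forall r f L y, (forall x, r x = Var (f x)) -> In y (lvars (map (tsubst r) L)) -> exists u, In u (lvars L) /\ y = f u.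
Proof.
  intros. apply lvars_subst in H0. destruct H0 as [u [Hu Hy]]. rewrite H in Hy. simpl in Hy.
  destruct Hy as [<-|[]]; eauto.
Qed.

Lemma PrivRes : forall M C r th p ts G1 R,
  Priv (APred p ts :: G1) R -> atom_satisfies M (APred p ts) -> clause_safe M C -> renaming r ->
  disjoint (cvars (csubst r C)) (gvars (APred p ts :: G1 ++ R)) -> hd_pred C = p ->
  is_mgu th ts (hd_args (csubst r C)) ->
  Priv (gsubst th (bd (csubst r C) ++ G1)) (gsubst th R).
Proof.
  intros M C r th p ts G1 R HP Hsat Hsafe [f [Hf1 [Hf2 _]]] Hd Hp Hth A' B' t1' t2' Heq x Hx.
  apply decomp_subst in Heq. destruct Heq as [Z [B [t1 [t2 [Heq [<- [<- [<- <-]]]]]]]].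
  rewrite <- !gsubst_app.
  apply vars_neq_subst in Hx. destruct Hx as [y [Hy Hx]].
  set (hs := hd_args (csubst r C)) in *.
  assert (Fin : ~ In y (lvars ts ++ lvars hs) -> ~ In y (gvars (Z ++ B ++ R)) -> ~ In x (gvars (gsubst th (Z ++ B ++ R)))).
  { intros H1 H2. rewrite (mgu_rel _ _ _ _ Hth H1) in Hx. simpl in Hx. destruct Hx as [<-|[]].
    apply mgu_notin with ts hs; auto. }
  assert (Old : forall l, G1 = l ++ ANeq t1 t2 :: B -> Z = bd (csubst r C) ++ l -> ~ In x (gvars (gsubst th (Z ++ B ++ R)))).
  { intros l HG HZ. pose proof (HP (APred p ts :: l) B t1 t2 ltac:(rewrite HG; reflexivity) y Hy) as Hn.
    assert (HyG : In y (gvars (APred p ts :: G1 ++ R))).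
    { rewrite gvars_cons, gvars_app, HG, gvars_app, gvars_cons. right; left; right; left. exact Hy. }
    assert (Hyc : ~ In y (cvars (csubst r C))) by (intro; apply (Hd y); auto).
    apply Fin.
    - intro Hin. apply in_app_or in Hin. destruct Hin as [Hin|Hin].
      + apply Hn. rewrite gvars_cons_app; left; auto.
      + apply Hyc. apply cvars_hd; auto.
    - rewrite HZ. rewrite !gvars_app. intros [[Hin|Hin]|[Hin|Hin]].
      + apply Hyc, cvars_bd; auto.
      + apply Hn; rewrite gvars_cons_app, !gvars_app; auto.
      + apply Hn; rewrite gvars_cons_app, !gvars_app; auto.
      + apply Hn; rewrite gvars_cons_app, !gvars_app; auto. }
  apply app_eq_app in Heq. destruct Heq as [l [[H1 H2]|[H1 H2]]].
  2: { apply (Old l); auto. }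
  destruct l as [|d l'].
  { simpl in H2. apply (Old []). simpl; congruence. rewrite app_nil_r in *; congruence. }
  simpl in H2. injection H2; intros HB Hd0. subst d B.
  (* new disequation from the body *)
  simpl in H1. unfold gsubst in H1. apply map_eq_app in H1. destruct H1 as [Z0 [L0 [HbC [HZ0 HL0]]]].
  apply map_eq_cons in HL0. destruct HL0 as [d0 [l0 [-> [Hd0 Hl0]]]].
  destruct d0 as [| s1 s2 |]; simpl in Hd0; try discriminate. injection Hd0; intros E2 E1.
  destruct (split_at Z0 (ANeq s1 s2) l0) as [Hnth [Hfirst Hskip]]. rewrite <- HbC in Hnth, Hfirst, Hskip.
  assert (Hyu : exists u, In u (tvars s1 ++ tvars s2) /\ y = f u).
  { rewrite <- E1, <- E2 in Hy. apply in_app_or in Hy. destruct Hy as [Hy|Hy]; apply tvars_subst in Hy;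
    destruct Hy as [u [Hu Hy]]; rewrite Hf1 in Hy; simpl in Hy; destruct Hy as [<-|[]]; exists u; rewrite in_app_iff; auto. }
  destruct Hyu as [u [Hu ->]].
  destruct (Hsafe (length Z0) s1 s2 Hnth u Hu) as [[ms [Hms Hin]]|Hloc].
  - (* input variable: becomes ground *)
    exfalso. destruct Hsat as [ms' [Hms' [_ Hg]]]. rewrite Hp in Hms. rewrite Hms in Hms'. injection Hms'; intros <-.
    destruct Hth as [U _]. unfold unifies in U.
    assert (Hu' : In (f u) (lvars (input_args ms hs))).
    { unfold hs. simpl. rewrite input_args_map. apply lvars_subst. exists u. split; auto. rewrite Hf1; simpl; auto. }
    assert (Hgr : lvars (map (tsubst th) (input_args ms hs)) = []).
    { rewrite <- input_args_map, <- U, input_args_map. unfold input_vars in Hg.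
      destruct (lvars (map (tsubst th) (input_args ms ts))) as [|z zs] eqn:Ez; auto.
      assert (In z (lvars (map (tsubst th) (input_args ms ts)))) by (rewrite Ez; simpl; auto).
      apply lvars_subst in H. destruct H as [w [Hw _]]. rewrite Hg in Hw. destruct Hw. }
    assert (In x (lvars (map (tsubst th) (input_args ms hs)))) by (apply lvars_subst; eauto).
    rewrite Hgr in H; destruct H.
  -
    rewrite Hfirst, Hskip in Hloc.
    assert (Hyc : In (f u) (cvars (csubst r C))).
    { apply (cvars_ren C r f); auto. exists u; split; auto. apply cvars_bd. rewrite HbC, gvars_app, gvars_cons. right; left. simpl; auto. }
    assert (Hng : ~ In (f u) (gvars (APred p ts :: G1 ++ R))) by (apply Hd; auto).
    apply Fin.
    + intro Hin. apply in_app_or in Hin. destruct Hin as [Hin|Hin].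
      * apply Hng. rewrite gvars_cons; left; auto.
      * unfold hs in Hin. simpl in Hin. apply (ren_vars_l r f) in Hin; auto. destruct Hin as [u' [Hu' Heq]].
        apply Hf2 in Heq; subst u'. apply Hloc. rewrite !in_app_iff. left. unfold hd; simpl; auto.
    + rewrite <- HZ0, !gvars_app. intros [Hin|[[Hin|Hin]|Hin]].
      * apply (ren_vars_g r f) in Hin; auto. destruct Hin as [u' [Hu' Heq]]. apply Hf2 in Heq; subst u'.
        apply Hloc. rewrite !in_app_iff; auto.
      * rewrite <- Hl0 in Hin. apply (ren_vars_g r f) in Hin; auto. destruct Hin as [u' [Hu' Heq]]. apply Hf2 in Heq; subst u'.
        apply Hloc. rewrite !in_app_iff; auto.
      * apply Hng. rewrite gvars_cons, gvars_app; auto.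
      * apply Hng. rewrite gvars_cons, gvars_app; auto.
Qed.


Lemma Sx_0 : forall P G k, Sx P G 0 k -> G = [].
Proof. intros. inversion H; auto. Qed.

Lemma app_cons_nil : forall (A : list atom) a B, A ++ a :: B <> [].
Proof. destruct A; simpl; discriminate. Qed.

Lemma gvars_perm3 : forall a A B C x, In x (gvars (a :: A ++ B ++ C)) <-> In x (gvars (a :: B ++ A ++ C)).
Proof. intros. rewrite !gvars_cons, !gvars_app. tauto. Qed.

Lemma Core : forall P M, program_safe M P -> forall n G1 Eqs G2 k, AllEq Eqs -> Priv G1 (Eqs ++ G2) -> Cons P M G1 ->
  (Sx P (G1 ++ Eqs ++ G2) n k <-> Sx P (Eqs ++ G1 ++ G2) n k).
Proof.
  intros P M Hsafe n. induction n as [|n IH]; intros G1 Eqs G2 k HE HP HC.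
  - destruct G1 as [|a G1]. simpl; tauto. split; intros H; apply Sx_0 in H.
    discriminate. exfalso; eapply app_cons_nil; eauto.
  - destruct G1 as [|a G1]. simpl; tauto.
    destruct a as [u1 u2|t1 t2|p ts]; simpl (_ ++ _).
    + assert (Inv : forall th, is_mgu th [u1] [u2] -> AllEq (gsubst th Eqs) /\
        Priv (gsubst th G1) (gsubst th Eqs ++ gsubst th G2) /\ Cons P M (gsubst th G1)).
      { intros th Hth. split. apply AllEq_subst; auto. split. rewrite <- gsubst_app. eapply PrivEq; eauto.
        eapply ConsStep; eauto. apply step_eq; auto. }
      rewrite EqMove by auto. rewrite !EqHead. split; intros [n' [th [Hn [Hth HS]]]]; injection Hn; intros <-;
      exists n, th; (split; [reflexivity|split;[exact Hth|]]); destruct (Inv th Hth) as [I1 [I2 I3]];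
      rewrite !gsubst_app in *.
      * apply (IH _ _ _ _ I1 I2 I3); auto.
      * apply (IH _ _ _ _ I1 I2 I3); auto.
    + assert (I1 : Priv G1 (Eqs ++ G2)) by (eapply Priv_tail; eauto).
      rewrite DiseqMove by (auto; eapply Priv_head; eauto). rewrite !NeqHead.
      split; intros [n' [Hn [Hu HS]]]; injection Hn; intros <-; exists n; (split; [reflexivity|split;[exact Hu|]]);
      assert (I2 : Cons P M G1) by (eapply ConsStep; eauto; apply step_neq; auto).
      * apply (IH _ _ _ _ HE I1 I2); auto.
      * apply (IH _ _ _ _ HE I1 I2); auto.
    + rewrite ResHead, ResMove by auto.
      assert (Key : forall k' C r th, P C -> renaming r -> disjoint (cvars (csubst r C)) (gvars (APred p ts :: G1 ++ Eqs ++ G2)) ->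
                 hd_pred C = p -> is_mgu th ts (hd_args (csubst r C)) ->
                 (Sx P (gsubst th (bd (csubst r C) ++ G1 ++ Eqs ++ G2)) n k' <-> Sx P (gsubst th (Eqs ++ bd (csubst r C) ++ G1 ++ G2)) n k')).
      { intros k' C r th HPC Hr Hd Hp Hth.
        assert (Hst : step P (APred p ts :: G1) (gsubst th (bd (csubst r C) ++ G1))).
        { subst p. apply step_res; auto. intros x Hx Hin. apply (Hd x Hx). rewrite gvars_cons, gvars_app in *. tauto. }
        assert (I1 : AllEq (gsubst th Eqs)) by (apply AllEq_subst; auto).
        assert (I2 : Priv (gsubst th (bd (csubst r C) ++ G1)) (gsubst th Eqs ++ gsubst th G2)).
        { rewrite <- gsubst_app. eapply PrivRes; eauto. eapply ConsHead; eauto. }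
        assert (I3 : Cons P M (gsubst th (bd (csubst r C) ++ G1))) by (eapply ConsStep; eauto).
        pose proof (IH _ _ _ k' I1 I2 I3) as HH.
        rewrite !gsubst_app in HH. rewrite !gsubst_app. rewrite <- !app_assoc in HH. exact HH. }
      split.
      * intros [n' [k' [C [r [th [Hn [Hk [HPC [Hr [Hd [Hp [Hth HS]]]]]]]]]]]]. injection Hn; intros <-.
        exists n, k', C, r, th. split; auto. split; auto. split; auto. split; auto.
        split. { intros x Hx Hin. apply (Hd x Hx). apply gvars_perm3; auto. }
        split; auto. split; auto. apply Key; auto.
      * intros [n' [k' [C [r [th [Hn [Hk [HPC [Hr [Hd [Hp [Hth HS]]]]]]]]]]]]. injection Hn; intros <-.
        exists n, k', C, r, th. split; auto. split; auto. split; auto. split; auto.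
        assert (Hd2 : disjoint (cvars (csubst r C)) (gvars (APred p ts :: G1 ++ Eqs ++ G2))).
        { intros x Hx Hin. apply (Hd x Hx). apply gvars_perm3; auto. }
        split; auto. split; auto. split; auto. apply Key; auto.
Qed.


Lemma StepFront : forall P a L X G', step P (a :: L ++ X) G' ->
  exists L' th, G' = L' ++ gsubst th X /\
    forall Y, incl (gvars Y) (gvars X) -> step P (a :: L ++ Y) (L' ++ gsubst th Y).
Proof.
  intros. inversion H; subst.
  - exists (gsubst th L), th. split. apply gsubst_app. intros. rewrite <- gsubst_app. apply step_eq; auto.
  - exists L, Var. split. rewrite gsubst_id; auto. intros. rewrite gsubst_id. apply step_neq; auto.
  - exists (gsubst th (bd (csubst rho C) ++ L)), th. split. rewrite <- gsubst_app, app_assoc; auto.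
    intros. rewrite <- gsubst_app, <- app_assoc. apply step_res; auto.
    intros x Hx Hin. match goal with Hd : disjoint _ _ |- _ => apply (Hd x Hx) end. rewrite gvars_cons, gvars_app in *.
    destruct Hin as [?|[?|?]]; auto.
Qed.

Lemma bnb_head : forall a L L', bnb (a :: L) = bnb (a :: L').
Proof. destruct a; reflexivity. Qed.

Lemma NoDiseq_subst : forall s G, NoDiseq G -> NoDiseq (gsubst s G).
Proof.
  intros s G H t1 t2 Hin. unfold gsubst in Hin. apply in_map_iff in Hin. destruct Hin as [b [Hb Hin]].
  destruct b; simpl in Hb; try discriminate. eapply H; eauto.
Qed.

Lemma Phase0 : forall P M, program_safe M P -> forall n G0 G1 Eqs G2 k, AllEq Eqs -> NoDiseq G1 -> Cons P M (G0 ++ G1) ->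
  (Sx P (G0 ++ G1 ++ Eqs ++ G2) n k <-> Sx P (G0 ++ Eqs ++ G1 ++ G2) n k).
Proof.
  intros P M Hsafe n. induction n as [|n IH]; intros G0 G1 Eqs G2 k HE HN HC.
  - destruct G0 as [|a G0].
    + simpl in *. apply (Core P M Hsafe); auto. apply Priv_nodiseq; auto.
    + split; intros H; apply Sx_0 in H; discriminate.
  - destruct G0 as [|a G0].
    + simpl in *. apply (Core P M Hsafe); auto. apply Priv_nodiseq; auto.
    +
      assert (Dir : forall X Y, incl (gvars Y) (gvars X) -> incl (gvars G1) (gvars X) ->
          (forall L' th kk, Cons P M (L' ++ gsubst th G1) -> Sx P (L' ++ gsubst th X) n kk -> Sx P (L' ++ gsubst th Y) n kk) ->
          forall kk, Sx P (a :: G0 ++ X) (S n) kk -> Sx P (a :: G0 ++ Y) (S n) kk).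
      { intros X Y HYX HG1 Hrec kk HS. inversion HS; subst.
        destruct (StepFront _ _ _ _ _ H0) as [L' [th [-> Hst]]].
        apply SxS' with (G' := L' ++ gsubst th Y) (k := k0).
        - apply Hst; auto.
        - apply Hrec; try exact H2. eapply ConsStep. exact HC. simpl. apply Hst. exact HG1.
        - f_equal; apply bnb_head. }
      assert (HX : incl (gvars (Eqs ++ G1 ++ G2)) (gvars (G1 ++ Eqs ++ G2)) /\ incl (gvars (G1 ++ Eqs ++ G2)) (gvars (Eqs ++ G1 ++ G2))).
      { split; intros x; rewrite !gvars_app; tauto. }
      assert (HG1 : incl (gvars G1) (gvars (G1 ++ Eqs ++ G2)) /\ incl (gvars G1) (gvars (Eqs ++ G1 ++ G2))).
      { split; intros x; rewrite !gvars_app; tauto. }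
      simpl (_ ++ _). split.
      * apply Dir; try tauto. intros L' th kk HC' HS. rewrite !gsubst_app in *.
        apply (IH L' (gsubst th G1) (gsubst th Eqs) (gsubst th G2)); auto.
        apply AllEq_subst; auto. apply NoDiseq_subst; auto.
      * apply Dir; try tauto. intros L' th kk HC' HS. rewrite !gsubst_app in *.
        apply (IH L' (gsubst th G1) (gsubst th Eqs) (gsubst th G2)); auto.
        apply AllEq_subst; auto. apply NoDiseq_subst; auto.
Qed.


Lemma deriv_Sx : forall P d G, successful_derivation_of P G d -> Sx P G (deriv_length d) (lambda d).
Proof.
  intros P d. induction d as [|G0 rest IH]; intros G [[r Hr] [Hd Hl]]. discriminate.
  injection Hr; intros Hr1 Hr2. subst r G0. destruct rest as [|G' rest].
  - simpl in Hl. subst. constructor.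
  - assert (Hs : step P G G') by (apply (Hd 0); simpl; lia).
    assert (Sx P G' (deriv_length (G' :: rest)) (lambda (G' :: rest))).
    { apply IH. split. eauto. split. intros i Hi. apply (Hd (S i)). simpl in *; lia. auto. }
    unfold deriv_length in *. simpl length in *. replace (S (S (length rest)) - 1) with (S (S (length rest) - 1)) by lia.
    replace (lambda (G :: G' :: rest)) with (bnb G + lambda (G' :: rest)).
    econstructor; eauto. unfold lambda, bnb. simpl. destruct (starts_nonbasic G); reflexivity.
Qed.

Lemma Sx_deriv : forall P G n k, Sx P G n k -> exists d, successful_derivation_of P G d /\ deriv_length d = n /\ lambda d = k.
Proof.
  intros. induction H.
  - exists [[]]. split. split. eauto. split. intros i Hi; simpl in Hi; lia. reflexivity. split; reflexivity.
  - destruct IHSx as [d [[[rest ->] [Hd Hl]] [Hn Hk]]]. exists (G :: G' :: rest). split; [split; [eauto|split]|split].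
    + intros [|i] Hi. simpl; auto. apply Hd. simpl in *; lia.
    + simpl in *. destruct rest; auto.
    + unfold deriv_length in *. simpl in *. lia.
    + unfold lambda, bnb in *. simpl. destruct (starts_nonbasic G); simpl; subst; auto.
Qed.

Lemma steps_Sx : forall P G, steps P G [] <-> exists n k, Sx P G n k.
Proof.
  intros. split.
  - intros H. apply clos_rt_rt1n in H. remember (@nil atom) as e. induction H; subst. exists 0, 0; constructor.
    destruct IHclos_refl_trans_1n as [n [k HS]]; auto. eexists; eexists; econstructor; eauto.
  - intros [n [k H]]. induction H. apply rt_refl. eapply rt_trans; [apply rt_step; eauto|]; auto.
Qed.

Lemma min_of_ext : forall Q Q', (forall n, Q n <-> Q' n) -> min_of Q = min_of Q'.
Proof.
  intros. unfold min_of.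
  destruct (excluded_middle_informative (exists n, Q n /\ forall m, Q m -> n <= m)) as [H1|H1];
  destruct (excluded_middle_informative (exists n, Q' n /\ forall m, Q' m -> n <= m)) as [H2|H2].
  - destruct (constructive_indefinite_description _ H1) as [a [Ha1 Ha2]].
    destruct (constructive_indefinite_description _ H2) as [b [Hb1 Hb2]]. simpl. f_equal.
    apply Nat.le_antisymm. apply Ha2, H; auto. apply Hb2, H; auto.
  - exfalso. apply H2. destruct H1 as [a [Ha1 Ha2]]. exists a. split. apply H; auto. intros; apply Ha2, H; auto.
  - exfalso. apply H1. destruct H2 as [a [Ha1 Ha2]]. exists a. split. apply H; auto. intros; apply Ha2, H; auto.
  - reflexivity.
Qed.

Theorem lemma7 (P : program) (M : mode) (Eqs G0 G1 G2 : goal) :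
  mode_for_program M P ->
  program_safe M P ->
  program_satisfies P M ->
  (forall a, In a Eqs -> exists t1 t2, a = AEq t1 t2) ->
  (forall t1 t2, ~ In (ANeq t1 t2) G1) ->
  (forall rest, derivation P ((G0 ++ G1) :: rest) ->
                consistent_with M ((G0 ++ G1) :: rest)) ->
  (steps P (G0 ++ G1 ++ Eqs ++ G2) [] <-> steps P (G0 ++ Eqs ++ G1 ++ G2) []) /\
  mu P (G0 ++ G1 ++ Eqs ++ G2) = mu P (G0 ++ Eqs ++ G1 ++ G2) /\
  nu P (G0 ++ G1 ++ Eqs ++ G2) = nu P (G0 ++ Eqs ++ G1 ++ G2).
Proof.
  intros _ Hsafe _ HE HN HC.
  assert (Key : forall n k, Sx P (G0 ++ G1 ++ Eqs ++ G2) n k <-> Sx P (G0 ++ Eqs ++ G1 ++ G2) n k).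
  { intros. apply (Phase0 P M Hsafe); auto. }
  assert (Gen : forall G, (forall k, (exists d, successful_derivation_of P G d /\ lambda d = k) <-> exists n, Sx P G n k) /\
                          (forall n, (exists d, successful_derivation_of P G d /\ deriv_length d = n) <-> exists k, Sx P G n k)).
  { intros G. split; intros; split.
    - intros [d [Hd <-]]. eexists; apply deriv_Sx; eauto.
    - intros [n H]. apply Sx_deriv in H. destruct H as [d [? [? ?]]]; eauto.
    - intros [d [Hd <-]]. eexists; apply deriv_Sx; eauto.
    - intros [k H]. apply Sx_deriv in H. destruct H as [d [? [? ?]]]; eauto. }
  split; [|split].
  - rewrite !steps_Sx. split; intros [n [k H]]; exists n, k; apply Key; auto.
  - unfold mu. apply min_of_ext. intros k. rewrite (proj1 (Gen _)), (proj1 (Gen _)).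
    split; intros [n H]; exists n; apply Key; auto.
  - unfold nu. apply min_of_ext. intros n. rewrite (proj2 (Gen _)), (proj2 (Gen _)).
    split; intros [k H]; exists k; apply Key; auto.
Qed.
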